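(* Let $X$ be a real Banach space, $f\in\Gamma_0(X)$, $S_f\ne\emptyset$, $\varepsilon\ge0$. Then $$\mathrm{Er}\{\mathrm{Ptb}^w(f,\varepsilon)\}>0\Rightarrow\mathrm{Er}\{\mathrm{Ptb}^w_l(f,\varepsilon)\}>0\Rightarrow\varepsilon\le|\partial f|_{\rm bd},$$ and $$\varepsilon<|\partial f|_{\rm bd}\Rightarrow\mathrm{Er}\{\mathrm{Ptb}(f,\varepsilon)\}>0\Rightarrow\mathrm{Er}\{\mathrm{Ptb}_l(f,\varepsilon)\}>0.$$
   Context: $X^*$ is the dual, $\mathbb{B}^*$ its closed unit ball. $\Gamma_0(X)$: proper convex lsc extended-real-valued functions on $X$. For convex $f$, $\partial f(x):=\{x^*\in X^*\mid \langle x^*,u-x\rangle\le f(u)-f(x)\ \forall u\in X\}$. $d(x,S)=\inf_{u\in S}\|u-x\|$, $d(x,\emptyset)=+\infty$, $\inf\emptyset=+\infty$. $S_f:=\{x\mid f(x)\le0\}$, $S_f^=:=\{x\mid f(x)=0\}$. Global error bound modulus: $\mathrm{Er}\,f:=\inf_{f(x)>0}\frac{f(x)}{d(x,S_f)}$. $|\partial f|_{\rm bd}:=\inf_{f(x)=0} d(0,\mathrm{bd}\,\partial f(x))$ (boundary in norm topology of $X^*$). For $x\in S_f^=$, $\varepsilon,\delta\ge0$: $\tau(f,x,\varepsilon,\delta):=\inf_{u:\,f(u)\ge-\varepsilon\|u-x\|-\delta} d(0,\partial f(u))$ if $0\notin\mathrm{int}\,\partial f(x)$, and $:=d(0,\mathrm{bd}\,\partial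 f(x))$ if $0\in\mathrm{int}\,\partial f(x)$. For $\varepsilon\ge0$: $g\in\mathrm{Ptb}(f,\varepsilon)$ if $S_g\ne\emptyset$, $g=f+p$ with $p:X\to\mathbb{R}$ convex, and there exist $x\in S_f^=$ and $\xi\ge0$ such that $\xi+|\partial f|_{\rm bd}-\tau(f,x,\xi,|p(x)|)\le\varepsilon$ and $|p(u)-p(x)|\le\xi\|u-x\|$ for all $u\in X$. $g\in\mathrm{Ptb}^w(f,\varepsilon)$ if $S_g\ne\emptyset$, $g=f+p$ with $p:X\to\mathbb{R}$ convex, and there is $x\in S_f^=$ with $|p(u)-p(x)|\le\varepsilon\|u-x\|$ for all $u$. $\mathrm{Ptb}_l(f,\varepsilon):=\{g\mid g(u)-f(u)=\langle x^*,u-x\rangle\ \forall u,\ \text{for some } x\in S_f^=,\ \xi\ge0,\ x^*\in\xi\mathbb{B}^*\text{ with }\xi+|\partial f|_{\rm bd}-\tau(f,x,\xi,0)\le\varepsilon\}$; $\mathrm{Ptb}^w_l(f,\varepsilon):=\{g\mid g(u)-f(u)=\langle x^*,u-x\rangle\ \forall u,\ \text{for some } x\in S_f^=,\ x^*\in\varepsilon\mathbb{B}^*\}$. For each such family $\mathcal{F}$, $\mathrm{Er}\{\mathcal{F}\}:=\inf_{g\in\mathcal{F}}\mathrm{Er}\,g$. *)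

(* Defs.v *)
From Stdlib Require Import Reals Lra Classical ClassicalEpsilon FunctionalExtensionality.
Open Scope R_scope.

Inductive Rbar : Type := Finite (r : R) | p_infty | m_infty.

Definition Rbar_le (x y : Rbar) : Prop :=
  match x, y with
  | m_infty, _ => True
  | _, p_infty => True
  | Finite a, Finite b => a <= b
  | _, _ => False
  end.

Definition Rbar_lt (x y : Rbar) : Prop := Rbar_le x y /\ x <> y.

Definition Rbar_addr (a : R) (y : Rbar) : Rbar :=
  match y with
  | Finite b => Finite (a + b)
  | p_infty => p_infty
  | m_infty => m_infty
  end.

Definition is_glb (E : Rbar -> Prop) (m : Rbar) : Prop :=
  (forall y, E y -> Rbar_le m y) /\
  (forall l, (forall y, E y -> Rbar_le l y) -> Rbar_le l m).
Definition is_lub (E : Rbar -> Prop) (m : Rbar) : Prop :=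
  (forall y, E y -> Rbar_le y m) /\
  (forall l, (forall y, E y -> Rbar_le y l) -> Rbar_le m l).

(* inf E (inf of the empty set is +oo), sup E *)
Definition Rbar_inf (E : Rbar -> Prop) : Rbar :=
  epsilon (inhabits p_infty) (is_glb E).
Definition Rbar_sup (E : Rbar -> Prop) : Rbar :=
  epsilon (inhabits p_infty) (is_lub E).

Definition Rbar_ratio (a b : Rbar) : Rbar :=
  match a, b with
  | Finite x, Finite y => if Rlt_dec 0 y then Finite (x / y) else p_infty
  | Finite _, p_infty => Finite 0
  | _, _ => p_infty
  end.

Record Banach : Type := {
  car :> Type;
  vzero : car;
  vadd : car -> car -> car;
  vopp : car -> car;
  vscal : R -> car -> car;
  vnorm : car -> R;
  vadd_assoc : forall x y z, vadd x (vadd y z) = vadd (vadd x y) z;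
  vadd_comm : forall x y, vadd x y = vadd y x;
  vadd_zero : forall x, vadd x vzero = x;
  vadd_opp : forall x, vadd x (vopp x) = vzero;
  vscal_one : forall x, vscal 1 x = x;
  vscal_assoc : forall a b x, vscal a (vscal b x) = vscal (a * b) x;
  vscal_distr_l : forall a x y, vscal a (vadd x y) = vadd (vscal a x) (vscal a y);
  vscal_distr_r : forall a b x, vscal (a + b) x = vadd (vscal a x) (vscal b x);
  vnorm_eq0 : forall x, vnorm x = 0 -> x = vzero;
  vnorm_scal : forall a x, vnorm (vscal a x) = Rabs a * vnorm x;
  vnorm_triangle : forall x y, vnorm (vadd x y) <= vnorm x + vnorm y;
  vcomplete : forall u : nat -> car,
    (forall e, 0 < e -> exists N, forall m n, (N <= m)%nat -> (N <= n)%nat ->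
        vnorm (vadd (u m) (vopp (u n))) < e) ->
    exists l, forall e, 0 < e -> exists N, forall n, (N <= n)%nat ->
        vnorm (vadd (u n) (vopp l)) < e
}.

Section Banach_defs.
Context {X : Banach}.

Definition vsub (x y : X) : X := vadd X x (vopp X y).

(* elements of X^* are the continuous linear functionals X -> R *)
Definition is_dual (phi : X -> R) : Prop :=
  (forall x y, phi (vadd X x y) = phi x + phi y) /\
  (forall a x, phi (vscal X a x) = a * phi x) /\
  (exists M, forall x, Rabs (phi x) <= M * vnorm X x).

Definition dnorm (phi : X -> R) : Rbar :=
  Rbar_sup (fun r => exists x, vnorm X x <= 1 /\ r = Finite (Rabs (phi x))).

Definition dzero : X -> R := fun _ => 0.
Definition dsub (phi psi : X -> R) : X -> R := fun x => phi x - psi x.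

(* interior, closure, boundary of A ⊆ X^* in the norm topology of X^* *)
Definition dinterior (A : (X -> R) -> Prop) (phi : X -> R) : Prop :=
  is_dual phi /\ exists r, 0 < r /\
    forall psi, is_dual psi -> Rbar_lt (dnorm (dsub psi phi)) (Finite r) -> A psi.
Definition dclosure (A : (X -> R) -> Prop) (phi : X -> R) : Prop :=
  is_dual phi /\ forall r, 0 < r ->
    exists psi, A psi /\ Rbar_lt (dnorm (dsub psi phi)) (Finite r).
Definition dboundary (A : (X -> R) -> Prop) (phi : X -> R) : Prop :=
  dclosure A phi /\ ~ dinterior A phi.

(* d(0, A) for A ⊆ X^*  (= +oo if A is empty) *)
Definition ddist0 (A : (X -> R) -> Prop) : Rbar :=
  Rbar_inf (fun r => exists phi, A phi /\ r = dnorm phi).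

(* d(x, S) for S ⊆ X  (= +oo if S is empty) *)
Definition dist (x : X) (S : X -> Prop) : Rbar :=
  Rbar_inf (fun r => exists u, S u /\ r = Finite (vnorm X (vsub u x))).

Definition proper (f : X -> Rbar) : Prop :=
  (exists x, exists r, f x = Finite r) /\ (forall x, f x <> m_infty).

Definition convex (f : X -> Rbar) : Prop :=
  forall x y a b t, 0 <= t <= 1 ->
    Rbar_le (f x) (Finite a) -> Rbar_le (f y) (Finite b) ->
    Rbar_le (f (vadd X (vscal X t x) (vscal X (1 - t) y))) (Finite (t * a + (1 - t) * b)).

Definition lsc (f : X -> Rbar) : Prop :=
  forall x a, Rbar_lt (Finite a) (f x) ->
    exists d, 0 < d /\ forall y, vnorm X (vsub y x) < d -> Rbar_lt (Finite a) (f y).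

Definition Gamma0 (f : X -> Rbar) : Prop := proper f /\ convex f /\ lsc f.

Definition convex_real (p : X -> R) : Prop :=
  forall x y t, 0 <= t <= 1 ->
    p (vadd X (vscal X t x) (vscal X (1 - t) y)) <= t * p x + (1 - t) * p y.

(* subdifferential; empty where f x is not finite *)
Definition subdiff (f : X -> Rbar) (x : X) (phi : X -> R) : Prop :=
  is_dual phi /\ exists fx, f x = Finite fx /\
    forall u, Rbar_le (Finite (phi (vsub u x) + fx)) (f u).

Definition Sf (f : X -> Rbar) (x : X) : Prop := Rbar_le (f x) (Finite 0).
Definition Sf_eq (f : X -> Rbar) (x : X) : Prop := f x = Finite 0.

Definition Er (f : X -> Rbar) : Rbar :=
  Rbar_inf (fun r => exists x, Rbar_lt (Finite 0) (f x) /\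
                               r = Rbar_ratio (f x) (dist x (Sf f))).

Definition subdiff_bd (f : X -> Rbar) : Rbar :=
  Rbar_inf (fun r => exists x, Sf_eq f x /\ r = ddist0 (dboundary (subdiff f x))).

Definition tau (f : X -> Rbar) (x : X) (eps delta : R) : Rbar :=
  if excluded_middle_informative (dinterior (subdiff f x) dzero)
  then ddist0 (dboundary (subdiff f x))
  else Rbar_inf (fun r => exists u,
          Rbar_le (Finite (- eps * vnorm X (vsub u x) - delta)) (f u) /\
          r = ddist0 (subdiff f u)).

(* perturbation families.
   The condition  xi + |∂f|_bd - tau <= eps  is read as  xi + |∂f|_bd <= eps + tau. *)
Definition Ptb (f : X -> Rbar) (eps : R) (g : X -> Rbar) : Prop :=
  (exists y, Sf g y) /\
  exists p : X -> R, convex_real p /\ (forall u, g u = Rbar_addr (p u) (f u)) /\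
  exists x xi, Sf_eq f x /\ 0 <= xi /\
    Rbar_le (Rbar_addr xi (subdiff_bd f)) (Rbar_addr eps (tau f x xi (Rabs (p x)))) /\
    (forall u, Rabs (p u - p x) <= xi * vnorm X (vsub u x)).

Definition Ptb_w (f : X -> Rbar) (eps : R) (g : X -> Rbar) : Prop :=
  (exists y, Sf g y) /\
  exists p : X -> R, convex_real p /\ (forall u, g u = Rbar_addr (p u) (f u)) /\
  exists x, Sf_eq f x /\
    (forall u, Rabs (p u - p x) <= eps * vnorm X (vsub u x)).

Definition Ptb_l (f : X -> Rbar) (eps : R) (g : X -> Rbar) : Prop :=
  exists x xi xs, Sf_eq f x /\ 0 <= xi /\ is_dual xs /\ Rbar_le (dnorm xs) (Finite xi) /\
    Rbar_le (Rbar_addr xi (subdiff_bd f)) (Rbar_addr eps (tau f x xi 0)) /\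
    (forall u, g u = Rbar_addr (xs (vsub u x)) (f u)).

Definition Ptb_wl (f : X -> Rbar) (eps : R) (g : X -> Rbar) : Prop :=
  exists x xs, Sf_eq f x /\ is_dual xs /\ Rbar_le (dnorm xs) (Finite eps) /\
    (forall u, g u = Rbar_addr (xs (vsub u x)) (f u)).

Definition Er_fam (F : (X -> Rbar) -> Prop) : Rbar :=
  Rbar_inf (fun r => exists g, F g /\ r = Er g).

End Banach_defs.

(* Main.v *)
Require Import Defs.
From Stdlib Require Import Reals Lra Lia Classical ClassicalEpsilon FunctionalExtensionality ProofIrrelevance.
From mathcomp Require classical_sets boolp.
Set Bullet Behavior "Strict Subproofs".
Open Scope R_scope.


Lemma Rbar_le_refl x : Rbar_le x x.
Proof. destruct x; simpl; auto; lra. Qed.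

Lemma Rbar_le_trans x y z : Rbar_le x y -> Rbar_le y z -> Rbar_le x z.
Proof. destruct x, y, z; simpl; intros; auto; try lra; contradiction. Qed.

Lemma Rbar_lt_fin a b : Rbar_lt (Finite a) (Finite b) <-> a < b.
Proof.
  unfold Rbar_lt; simpl; split.
  - intros [H1 H2]. destruct H1; auto. subst; contradiction.
  - intros H; split; [lra| intro E; inversion E; lra].
Qed.

Lemma Rbar_lt_le x y : Rbar_lt x y -> Rbar_le x y.
Proof. intros [H _]; exact H. Qed.

Lemma Rbar_not_le_lt x y : ~ Rbar_le x y -> Rbar_lt y x.
Proof.
  destruct x, y; simpl; unfold Rbar_lt; simpl; intros H; try tauto;
  try (split; [lra| intro E; inversion E; lra]);
  try (split; [auto|discriminate]).
Qed.

Lemma Rbar_lt_not_le x y : Rbar_lt x y -> ~ Rbar_le y x.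
Proof.
  destruct x, y; unfold Rbar_lt; simpl; intros [H1 H2] H3; try tauto.
  apply H2; f_equal; lra.
Qed.

Lemma Rbar_le_lt_trans x y z : Rbar_le x y -> Rbar_lt y z -> Rbar_lt x z.
Proof.
  intros H1 H2. apply Rbar_not_le_lt. intro H3.
  apply (Rbar_lt_not_le _ _ H2). eapply Rbar_le_trans; eauto.
Qed.

Lemma Rbar_lt_le_trans x y z : Rbar_lt x y -> Rbar_le y z -> Rbar_lt x z.
Proof.
  intros H1 H2. apply Rbar_not_le_lt. intro H3.
  apply (Rbar_lt_not_le _ _ H1). eapply Rbar_le_trans; eauto.
Qed.

Lemma glb_exists (E : Rbar -> Prop) : exists m, Defs.is_glb E m.
Proof.
  destruct (classic (E m_infty)) as [Hm|Hm].
  { exists m_infty; split; intros; simpl; auto. }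
  destruct (classic (exists r, E (Finite r))) as [[r0 Hr0]|Hne].
  - destruct (classic (exists b, forall r, E (Finite r) -> b <= r)) as [[b Hb]|Hnb].
    + assert (HB : bound (fun s => E (Finite (- s)))).
      { exists (- b). intros s Hs. apply Hb in Hs. lra. }
      assert (HN : exists s, E (Finite (- s))).
      { exists (- r0). rewrite Ropp_involutive. exact Hr0. }
      destruct (completeness _ HB HN) as [s [Hs1 Hs2]].
      exists (Finite (- s)). split.
      * intros y Hy. destruct y as [r| |]; simpl; auto.
        assert (-r <= s). { apply Hs1. rewrite Ropp_involutive. exact Hy. }
        lra.
      * intros l Hl. destruct l as [a| |]; simpl; auto.
        -- assert (s <= - a). { apply Hs2. intros t Ht. apply Hl in Ht. simpl in Ht. lra. }
           lra.
        -- apply Hl in Hr0. simpl in Hr0. exact Hr0.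
    + exists m_infty. split; [intros; simpl; auto|].
      intros l Hl. destruct l as [a| |]; simpl; auto.
      * apply Hnb. exists a. intros r Hr. apply Hl in Hr. exact Hr.
      * apply Hl in Hr0. exact Hr0.
  - exists p_infty. split.
    + intros y Hy. destruct y as [r| |]; simpl; auto.
      * apply Hne. exists r. exact Hy.
    + intros l _. destruct l; simpl; auto.
Qed.

Lemma lub_exists (E : Rbar -> Prop) : exists m, Defs.is_lub E m.
Proof.
  destruct (classic (E p_infty)) as [Hm|Hm].
  { exists p_infty; split; [intros y _; destruct y; simpl; auto| intros l Hl; apply Hl in Hm; exact Hm]. }
  destruct (classic (exists r, E (Finite r))) as [[r0 Hr0]|Hne].
  - destruct (classic (exists b, forall r, E (Finite r) -> r <= b)) as [[b Hb]|Hnb].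
    + assert (HB : bound (fun s => E (Finite s))).
      { exists b. intros s Hs. apply Hb in Hs. lra. }
      assert (HN : exists s, E (Finite s)) by (exists r0; exact Hr0).
      destruct (completeness _ HB HN) as [s [Hs1 Hs2]].
      exists (Finite s). split.
      * intros y Hy. destruct y as [r| |]; simpl; auto.
      * intros l Hl. destruct l as [a| |]; simpl; auto.
        -- try (apply Hs2; intros t Ht; apply Hl in Ht; exact Ht).
        -- apply Hl in Hr0. exact Hr0.
    + exists p_infty. split; [intros y _; destruct y; simpl; auto|].
      intros l Hl. destruct l as [a| |]; simpl; auto.
      * apply Hnb. exists a. intros r Hr. apply Hl in Hr. exact Hr.
      * apply Hl in Hr0. exact Hr0.
  - exists m_infty. split.
    + intros y Hy. destruct y as [r| |]; simpl; auto.
      * apply Hne. exists r. exact Hy.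
    + intros l _. destruct l; simpl; auto.
Qed.

Lemma Rbar_inf_glb E : Defs.is_glb E (Rbar_inf E).
Proof.
  unfold Rbar_inf. apply epsilon_spec. apply glb_exists.
Qed.

Lemma Rbar_sup_lub E : Defs.is_lub E (Rbar_sup E).
Proof.
  unfold Rbar_sup. apply epsilon_spec. apply lub_exists.
Qed.

Lemma inf_lower (E : Rbar -> Prop) y : E y -> Rbar_le (Rbar_inf E) y.
Proof. intros H. apply (proj1 (Rbar_inf_glb E)). exact H. Qed.

Lemma inf_greatest (E : Rbar -> Prop) l : (forall y, E y -> Rbar_le l y) -> Rbar_le l (Rbar_inf E).
Proof. intros H. apply (proj2 (Rbar_inf_glb E)). exact H. Qed.

Lemma sup_upper (E : Rbar -> Prop) y : E y -> Rbar_le y (Rbar_sup E).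
Proof. intros H. apply (proj1 (Rbar_sup_lub E)). exact H. Qed.

Lemma sup_least (E : Rbar -> Prop) l : (forall y, E y -> Rbar_le y l) -> Rbar_le (Rbar_sup E) l.
Proof. intros H. apply (proj2 (Rbar_sup_lub E)). exact H. Qed.

Lemma inf_lt_ex (E : Rbar -> Prop) l : ~ Rbar_le l (Rbar_inf E) -> exists y, E y /\ ~ Rbar_le l y.
Proof.
  intros H. apply NNPP. intro H'. apply H. apply inf_greatest.
  intros y Hy. apply NNPP. intro H2. apply H'. exists y; auto.
Qed.

Lemma Rbar_between a y b : Rbar_le (Finite a) y -> Rbar_le y (Finite b) ->
  exists d, y = Finite d /\ a <= d <= b.
Proof. destruct y; simpl; intros; try contradiction. exists r; auto. Qed.


Section Vec.
Context {X : Banach}.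
Local Notation vadd := (vadd X).
Local Notation vscal := (vscal X).
Local Notation vopp := (vopp X).
Local Notation vzero := (vzero X).
Local Notation vnorm := (vnorm X).

Lemma vadd_zero_l (x : X) : vadd vzero x = x.
Proof. rewrite vadd_comm. apply vadd_zero. Qed.

Lemma vadd_cancel_l (a b c : X) : vadd a b = vadd a c -> b = c.
Proof.
  intros H. assert (H2 : vadd (vopp a) (vadd a b) = vadd (vopp a) (vadd a c)) by (rewrite H; auto).
  rewrite !vadd_assoc in H2. rewrite (vadd_comm X (vopp a) a), vadd_opp, !vadd_zero_l in H2. exact H2.
Qed.

Lemma vscal_zero (x : X) : vscal 0 x = vzero.
Proof.
  apply (vadd_cancel_l (vscal 0 x)). rewrite vadd_zero, <- vscal_distr_r.
  f_equal; ring.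
Qed.

Lemma vscal_vzero (a : R) : vscal a vzero = vzero.
Proof.
  rewrite <- (vscal_zero vzero), vscal_assoc. f_equal; ring.
Qed.

Lemma vopp_unique (x y : X) : vadd x y = vzero -> y = vopp x.
Proof.
  intros H. apply (vadd_cancel_l x). rewrite H, vadd_opp. reflexivity.
Qed.

Lemma vscal_m1 (x : X) : vscal (-1) x = vopp x.
Proof.
  apply vopp_unique. rewrite <- (vscal_one X x) at 1. rewrite <- vscal_distr_r.
  replace (1 + -1) with 0 by ring. apply vscal_zero.
Qed.

Lemma vopp_scal a (x : X) : vopp (vscal a x) = vscal (- a) x.
Proof. rewrite <- vscal_m1, vscal_assoc. f_equal; ring. Qed.

Lemma vnorm_zero : vnorm vzero = 0.
Proof. rewrite <- (vscal_zero vzero), vnorm_scal, Rabs_R0. ring. Qed.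

Lemma vnorm_opp (x : X) : vnorm (vopp x) = vnorm x.
Proof. rewrite <- vscal_m1, vnorm_scal. replace (Rabs (-1)) with 1 by (rewrite Rabs_left; lra). ring. Qed.

Lemma vnorm_nonneg (x : X) : 0 <= vnorm x.
Proof.
  pose proof (vnorm_triangle X x (vopp x)) as H.
  rewrite vadd_opp, vnorm_zero, vnorm_opp in H. lra.
Qed.

Lemma vsub_self (x : X) : vsub x x = vzero.
Proof. apply vadd_opp. Qed.

Lemma vsub_zero (x : X) : vsub x vzero = x.
Proof.
  unfold vsub. rewrite <- vscal_m1, vscal_vzero. apply vadd_zero.
Qed.

Lemma vopp_opp (x : X) : vopp (vopp x) = x.
Proof. rewrite <- !vscal_m1, vscal_assoc. replace (-1 * -1) with 1 by ring. apply vscal_one. Qed.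

Lemma vopp_add (x y : X) : vopp (vadd x y) = vadd (vopp x) (vopp y).
Proof. rewrite <- !vscal_m1. apply vscal_distr_l. Qed.

Lemma vsub_swap (x y : X) : vsub y x = vopp (vsub x y).
Proof. unfold vsub. rewrite vopp_add, vopp_opp. apply vadd_comm. Qed.

Lemma vnorm_sub_sym (x y : X) : vnorm (vsub x y) = vnorm (vsub y x).
Proof. rewrite vsub_swap, vnorm_opp. reflexivity. Qed.

Lemma vsub_eq0 (x y : X) : vsub x y = vzero -> x = y.
Proof.
  unfold vsub. intros H. pose proof (vopp_unique _ _ H) as H2.
  rewrite <- (vopp_opp x), <- (vopp_opp y). f_equal. symmetry. exact H2.
Qed.

Lemma vnorm_eq0_sub (x y : X) : vnorm (vsub x y) = 0 -> x = y.
Proof. intros H. apply vsub_eq0, vnorm_eq0, H. Qed.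

Lemma vnorm_sub_pos (x y : X) : x <> y -> 0 < vnorm (vsub x y).
Proof.
  intros H. destruct (vnorm_nonneg (vsub x y)) as [H1|H1]; auto.
  exfalso. apply H. apply vnorm_eq0_sub. auto.
Qed.

Lemma vsub_tri (x y z : X) : vnorm (vsub x z) <= vnorm (vsub x y) + vnorm (vsub y z).
Proof.
  replace (vsub x z) with (vadd (vsub x y) (vsub y z)). apply vnorm_triangle.
  unfold vsub. rewrite <- vadd_assoc. f_equal. rewrite vadd_assoc, (vadd_comm X (vopp y) y), vadd_opp.
  apply vadd_zero_l.
Qed.

Lemma vsub_comb_l (w v : X) t : vsub (vadd (vscal t w) (vscal (1 - t) v)) v = vscal t (vsub w v).
Proof.
  unfold vsub. rewrite vscal_distr_l, <- !vscal_m1, vscal_assoc, <- vadd_assoc, <- vscal_distr_r.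
  f_equal. f_equal. ring.
Qed.

Lemma vadd_sub (a b : X) : vadd b (vsub a b) = a.
Proof. unfold vsub. rewrite vadd_comm, <- vadd_assoc, (vadd_comm X (vopp b) b), vadd_opp. apply vadd_zero. Qed.

Lemma vsub_add_l (a b c : X) : vsub (vadd a b) (vadd a c) = vsub b c.
Proof.
  unfold vsub. rewrite vopp_add. rewrite vadd_assoc. f_equal.
  rewrite (vadd_comm X a b), <- vadd_assoc, vadd_opp, vadd_zero. reflexivity.
Qed.

Lemma vsub_scal (a b : X) t : vscal t (vsub a b) = vsub (vscal t a) (vscal t b).
Proof. unfold vsub. rewrite vscal_distr_l, !vopp_scal, <- vscal_m1, vscal_assoc. f_equal. f_equal. ring. Qed.

Lemma vscal_sub_r (a : X) s t : vsub (vscal s a) (vscal t a) = vscal (s - t) a.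
Proof. unfold vsub. rewrite vopp_scal, <- vscal_distr_r; f_equal; try ring. Qed.

End Vec.


Section Dual.
Context {X : Banach}.
Local Notation vadd := (vadd X).
Local Notation vscal := (vscal X).
Local Notation vopp := (vopp X).
Local Notation vzero := (vzero X).
Local Notation vnorm := (vnorm X).

Lemma dual_add (phi : X -> R) : is_dual phi -> forall a b, phi (vadd a b) = phi a + phi b.
Proof. intros [H _]; exact H. Qed.
Lemma dual_scal (phi : X -> R) : is_dual phi -> forall t a, phi (vscal t a) = t * phi a.
Proof. intros [_ [H _]]; exact H. Qed.
Lemma dual_zero (phi : X -> R) : is_dual phi -> phi vzero = 0.
Proof. intros H. rewrite <- (vscal_zero vzero), (dual_scal _ H). ring. Qed.
Lemma dual_opp (phi : X -> R) : is_dual phi -> forall a, phi (vopp a) = - phi a.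
Proof. intros H a. rewrite <- vscal_m1, (dual_scal _ H). ring. Qed.
Lemma dual_sub (phi : X -> R) : is_dual phi -> forall a b, phi (vsub a b) = phi a - phi b.
Proof. intros H a b. unfold vsub. rewrite (dual_add _ H), (dual_opp _ H). ring. Qed.
Lemma dual_comb (phi : X -> R) : is_dual phi -> forall t s a b,
  phi (vadd (vscal t a) (vscal s b)) = t * phi a + s * phi b.
Proof. intros H t s a b. rewrite (dual_add _ H), !(dual_scal _ H). ring. Qed.

Lemma dnorm_le_of_bound (phi : X -> R) M :
  0 <= M -> (forall h, Rabs (phi h) <= M * vnorm h) -> Rbar_le (dnorm phi) (Finite M).
Proof.
  intros HM H. unfold dnorm. apply sup_least. intros y [x [Hx ->]]. simpl.
  eapply Rle_trans; [apply H|]. pose proof (vnorm_nonneg x). nra.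
Qed.

Lemma dnorm_ge0 (phi : X -> R) : is_dual phi -> Rbar_le (Finite 0) (dnorm phi).
Proof.
  intros H. unfold dnorm. apply (Rbar_le_trans _ (Finite (Rabs (phi vzero)))).
  - rewrite (dual_zero _ H), Rabs_R0. simpl; lra.
  - apply sup_upper. exists vzero. split; auto. rewrite vnorm_zero; lra.
Qed.

Lemma dnorm_bound (phi : X -> R) M : is_dual phi -> Rbar_le (dnorm phi) (Finite M) ->
  forall h, Rabs (phi h) <= M * vnorm h.
Proof.
  intros Hd HM h. destruct (vnorm_nonneg h) as [Hp|H0].
  - set (y := vscal (/ vnorm h) h).
    assert (Hy : vnorm y = 1). { unfold y. rewrite vnorm_scal, Rabs_right.
      field. lra. left; apply Rinv_0_lt_compat; lra. }
    assert (Hle : Rbar_le (Finite (Rabs (phi y))) (Finite M)).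
    { eapply Rbar_le_trans; [|exact HM]. apply sup_upper. exists y. split; auto. lra. }
    simpl in Hle. unfold y in Hle. rewrite (dual_scal _ Hd), Rabs_mult in Hle.
    rewrite Rabs_right in Hle by (left; apply Rinv_0_lt_compat; lra).
    apply (Rmult_le_compat_l (vnorm h)) in Hle; [|lra].
    replace (vnorm h * (/ vnorm h * Rabs (phi h))) with (Rabs (phi h)) in Hle by (field; lra). lra.
  - symmetry in H0. apply vnorm_eq0 in H0. rewrite H0, (dual_zero _ Hd), vnorm_zero, Rabs_R0. lra.
Qed.

Lemma dnorm_fin (phi : X -> R) : is_dual phi ->
  exists n, dnorm phi = Finite n /\ 0 <= n /\ forall h, Rabs (phi h) <= n * vnorm h.
Proof.
  intros Hd. destruct Hd as [H1 [H2 [M HM]]].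
  assert (Hd : is_dual phi) by (split; [|split]; eauto).
  assert (HU : Rbar_le (dnorm phi) (Finite (Rmax M 0))).
  { apply dnorm_le_of_bound. apply Rmax_r. intros h. eapply Rle_trans; [apply HM|].
    apply Rmult_le_compat_r; [apply vnorm_nonneg|apply Rmax_l]. }
  destruct (Rbar_between _ _ _ (dnorm_ge0 _ Hd) HU) as [n [Hn1 Hn2]].
  exists n. split; auto. split; [lra|]. apply dnorm_bound; auto. rewrite Hn1. simpl; lra.
Qed.

Lemma dnorm_lt_bound (phi : X -> R) r : is_dual phi -> Rbar_lt (dnorm phi) (Finite r) ->
  forall h, Rabs (phi h) <= r * vnorm h.
Proof. intros Hd Hl. apply dnorm_bound; auto. apply Rbar_lt_le; auto. Qed.

Lemma dnorm_lt_of_bound (phi : X -> R) M r :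
  0 <= M -> M < r -> (forall h, Rabs (phi h) <= M * vnorm h) -> Rbar_lt (dnorm phi) (Finite r).
Proof.
  intros HM Hr H. eapply Rbar_le_lt_trans. apply dnorm_le_of_bound; eauto.
  apply Rbar_lt_fin; auto.
Qed.

Lemma is_dual_lin (phi : X -> R) M :
  (forall a b, phi (vadd a b) = phi a + phi b) -> (forall t a, phi (vscal t a) = t * phi a) ->
  (forall h, Rabs (phi h) <= M * vnorm h) -> is_dual phi.
Proof. intros; split; [|split]; eauto. Qed.

Lemma is_dual_comb (phi psi : X -> R) a b : is_dual phi -> is_dual psi ->
  is_dual (fun h => a * phi h + b * psi h).
Proof.
  intros H1 H2. destruct (dnorm_fin _ H1) as [n1 [_ [Hn1 B1]]]. destruct (dnorm_fin _ H2) as [n2 [_ [Hn2 B2]]].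
  apply (is_dual_lin _ (Rabs a * n1 + Rabs b * n2)).
  - intros. rewrite (dual_add _ H1), (dual_add _ H2). ring.
  - intros. rewrite (dual_scal _ H1), (dual_scal _ H2). ring.
  - intros h. eapply Rle_trans; [apply Rabs_triang|]. rewrite !Rabs_mult.
    pose proof (B1 h); pose proof (B2 h). pose proof (Rabs_pos a); pose proof (Rabs_pos b).
    pose proof (vnorm_nonneg h). nra.
Qed.

Lemma is_dual_dsub (phi psi : X -> R) : is_dual phi -> is_dual psi -> is_dual (dsub phi psi).
Proof.
  intros H1 H2. unfold dsub. assert (E : (fun x => phi x - psi x) = (fun h => 1 * phi h + (-1) * psi h)).
  { apply functional_extensionality; intros; ring. }
  rewrite E. apply is_dual_comb; auto.
Qed.

Lemma is_dual_zero : is_dual (@dzero X).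
Proof. apply (is_dual_lin _ 0); unfold dzero; intros; try ring. rewrite Rabs_R0; lra. Qed.

End Dual.


Lemma zorn_prop (T : Type) (Rl : T -> T -> Prop) :
  (forall t, Rl t t) -> (forall r s t, Rl r s -> Rl s t -> Rl r t) ->
  (forall s t, Rl s t -> Rl t s -> s = t) ->
  (forall A : T -> Prop, (forall s t, A s -> A t -> Rl s t \/ Rl t s) ->
      exists t, forall s, A s -> Rl s t) ->
  exists t, forall s, Rl t s -> s = t.
Proof.
  intros H1 H2 H3 H4.
  pose (iT := fun P (H : P) => ssrbool.introT (boolp.asboolP P) H).
  pose (eT := fun P (H : is_true (boolp.asbool P)) => ssrbool.elimT (boolp.asboolP P) H).
  destruct (@classical_sets.Zorn T (fun s t => boolp.asbool (Rl s t))) as [t Ht].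
  - intros t. apply iT. apply H1.
  - intros r s t Hrs Hst. apply iT. apply (H2 r s t); apply eT; assumption.
  - intros s t Hst Hts. apply H3; apply eT; assumption.
  - intros A HA. destruct (H4 A) as [t Ht].
    + intros s t Hs Ht. destruct (HA s t Hs Ht) as [E|E]; [left|right]; apply eT; exact E.
    + exists t. intros s Hs. apply iT. apply Ht, Hs.
  - exists t. intros s Hs. apply Ht. apply iT. exact Hs.
Qed.

Definition is_rglb (E : R -> Prop) (i : R) : Prop :=
  (forall e, E e -> i <= e) /\ (forall j, (forall e, E e -> j <= e) -> j <= i).

Definition rglb (E : R -> Prop) : R := epsilon (inhabits 0) (is_rglb E).

Lemma rglb_spec (E : R -> Prop) : (exists e, E e) -> (exists m, forall e, E e -> m <= e) ->
  is_rglb E (rglb E).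
Proof.
  intros [e0 He0] [m Hm]. unfold rglb. apply epsilon_spec.
  assert (HB : bound (fun s => E (- s))). { exists (- m). intros s Hs. apply Hm in Hs. lra. }
  assert (HN : exists s, E (- s)). { exists (- e0). rewrite Ropp_involutive; auto. }
  destruct (completeness _ HB HN) as [s [H1 H2]].
  exists (- s). split.
  - intros e He. assert (-e <= s). { apply H1. rewrite Ropp_involutive; auto. } lra.
  - intros j Hj. assert (s <= - j). { apply H2. intros t Ht. apply Hj in Ht. lra. } lra.
Qed.

Lemma rglb_le E e : (exists m, forall e, E e -> m <= e) -> E e -> rglb E <= e.
Proof. intros Hm He. apply (proj1 (rglb_spec E (ex_intro _ e He) Hm)); auto. Qed.

Lemma rglb_ge E j : (exists e, E e) -> (forall e, E e -> j <= e) -> j <= rglb E.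
Proof. intros He Hj. apply (proj2 (rglb_spec E He (ex_intro _ j Hj))); auto. Qed.

Lemma rglb_approx E d : (exists e, E e) -> (exists m, forall e, E e -> m <= e) -> 0 < d ->
  exists e, E e /\ e < rglb E + d.
Proof.
  intros He Hm Hd. apply NNPP. intro H.
  assert (rglb E + d <= rglb E).
  { apply rglb_ge; auto. intros e Ee. apply Rnot_lt_le. intro H2. apply H. exists e; auto. }
  lra.
Qed.

Lemma le_eps (a b : R) : (forall d, 0 < d -> a <= b + d) -> a <= b.
Proof.
  intros H. apply Rnot_lt_le. intro H2. specialize (H ((a - b)/2)). lra.
Qed.

Section HB.
Context {X : Banach}.
Local Notation vadd := (vadd X).
Local Notation vscal := (vscal X).
Local Notation vopp := (vopp X).
Local Notation vzero := (vzero X).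
Local Notation vnorm := (vnorm X).

Definition sublin (q : X -> R) : Prop :=
  (forall a b, q (vadd a b) <= q a + q b) /\ (forall t a, 0 < t -> q (vscal t a) = t * q a).

Definition linear (l : X -> R) : Prop :=
  (forall a b, l (vadd a b) = l a + l b) /\ (forall t a, l (vscal t a) = t * l a).

Lemma sublin_zero q : sublin q -> q vzero = 0.
Proof.
  intros [_ H]. pose proof (H 2 vzero ltac:(lra)) as E. rewrite vscal_vzero in E. lra.
Qed.

Lemma sublin_scal0 q : sublin q -> forall t a, 0 <= t -> q (vscal t a) = t * q a.
Proof.
  intros Hq t a [Ht|Ht]. apply (proj2 Hq); auto. subst. rewrite vscal_zero, sublin_zero; auto; ring.
Qed.

Lemma sublin_lower q : sublin q -> forall h, - q (vopp h) <= q h.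
Proof.
  intros Hq h. pose proof (proj1 Hq h (vopp h)) as E. rewrite vadd_opp, sublin_zero in E; auto. lra.
Qed.

Lemma HB_sublin (q : X -> R) : sublin q -> exists l, linear l /\ forall h, l h <= q h.
Proof.
  intros Hq.
  set (T := {p : X -> R | sublin p /\ forall h, p h <= q h}).
  set (Rl := fun (s t : T) => forall h, proj1_sig t h <= proj1_sig s h).
  destruct (zorn_prop T Rl) as [[p [Hp Hpq]] Hmax].
  - intros t h; lra.
  - intros r s t H1 H2 h. specialize (H1 h); specialize (H2 h); lra.
  - intros [s Hs] [t Ht] H1 H2. unfold Rl in *; simpl in *.
    assert (s = t). { apply functional_extensionality; intros h. specialize (H1 h); specialize (H2 h); lra. }
    subst. f_equal. apply proof_irrelevance.
  - intros A HA. destruct (classic (exists s, A s)) as [[s0 Hs0]|Hne].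
    + set (m := fun h => rglb (fun y => exists s, A s /\ y = proj1_sig s h)).
      assert (Hbd : forall h, exists m0, forall e, (exists s, A s /\ e = proj1_sig s h) -> m0 <= e).
      { intros h. exists (- q (vopp h)). intros e [s' [_ E]]. subst e. destruct s' as [s [Hs Hsq]]. simpl.
        pose proof (sublin_lower s Hs h). pose proof (Hsq (vopp h)). lra. }
      assert (Hne : forall h, exists e, exists s, A s /\ e = proj1_sig s h).
      { intros h. exists (proj1_sig s0 h). exists s0; auto. }
      assert (Hlow : forall s h, A s -> m h <= proj1_sig s h).
      { intros s h Hs. apply rglb_le; auto. exists s; auto. }
      assert (Happ : forall h d, 0 < d -> exists s, A s /\ proj1_sig s h < m h + d).
      { intros h d Hd. destruct (rglb_approx _ d (Hne h) (Hbd h) Hd) as [e [[s [Hs ->]] He]].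
        exists s; auto. }
      assert (Hm : sublin m /\ forall h, m h <= q h).
      { split; [split|].
        - intros a b. apply le_eps. intros d Hd.
          destruct (Happ a (d/2) ltac:(lra)) as [s1 [Hs1 E1]].
          destruct (Happ b (d/2) ltac:(lra)) as [s2 [Hs2 E2]].
          assert (exists s, A s /\ proj1_sig s a <= proj1_sig s1 a /\ proj1_sig s b <= proj1_sig s2 b)
            as [s [Hs [F1 F2]]].
          { destruct (HA s1 s2 Hs1 Hs2) as [G|G]; unfold Rl in G.
            - exists s2. split; auto. split; [apply G|lra].
            - exists s1. split; auto. split; [lra|apply G]. }
          pose proof (Hlow s (vadd a b) Hs). destruct s as [s [Hsub Hsq]]. simpl in *.
          pose proof (proj1 Hsub a b). lra.
        - intros t a Ht. apply Rle_antisym.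
          + apply le_eps. intros d Hd.
            destruct (Happ a (d / t) ltac:(apply Rdiv_lt_0_compat; lra)) as [s [Hs E]].
            pose proof (Hlow s (vscal t a) Hs). destruct s as [s [Hsub Hsq]]. simpl in *.
            rewrite (proj2 Hsub t a Ht) in H.
            apply (Rmult_lt_compat_l t) in E; auto.
            replace (t * (m a + d / t)) with (t * m a + d) in E by (field; lra). lra.
          + apply rglb_ge; auto. intros e [s' [Hs E]]. subst e. pose proof (Hlow s' a Hs) as Hl.
            destruct s' as [s [Hsub Hsq]]. simpl in *. rewrite (proj2 Hsub t a Ht). nra.
        - intros h. pose proof (Hlow s0 h Hs0). destruct s0 as [s0 [Hs00 Hq0]]. simpl in *.
          pose proof (Hq0 h). lra. }
      exists (exist _ m Hm). intros s Hs h. simpl. apply Hlow; auto.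
    + exists (exist _ q (conj Hq (fun h => Rle_refl _))). intros s Hs. exfalso. apply Hne. eauto.
  -
    assert (Hsup : forall a h, p h + p a <= p (vadd h a)).
    { intros a h.
      set (pa := fun h => rglb (fun y => exists tau, 0 <= tau /\ y = p (vadd h (vscal tau a)) - tau * p a)).
      assert (Hbd : forall h, exists m0, forall e,
          (exists tau, 0 <= tau /\ e = p (vadd h (vscal tau a)) - tau * p a) -> m0 <= e).
      { intros h0. exists (- p (vopp h0)). intros e [tau [Htau ->]].
        pose proof (proj1 Hp (vadd h0 (vscal tau a)) (vopp h0)) as E.
        replace (vadd (vadd h0 (vscal tau a)) (vopp h0)) with (vscal tau a) in E.
        2:{ rewrite (vadd_comm X h0), <- vadd_assoc, vadd_opp, vadd_zero. reflexivity. }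
        rewrite sublin_scal0 in E; auto. lra. }
      assert (Hne : forall h, exists e, exists tau, 0 <= tau /\ e = p (vadd h (vscal tau a)) - tau * p a).
      { intros h0. eexists. exists 0. split; [lra|reflexivity]. }
      assert (Hlow : forall h tau, 0 <= tau -> pa h <= p (vadd h (vscal tau a)) - tau * p a).
      { intros h0 tau Ht. apply rglb_le; auto. exists tau; auto. }
      assert (Happ : forall h d, 0 < d -> exists tau, 0 <= tau /\ p (vadd h (vscal tau a)) - tau * p a < pa h + d).
      { intros h0 d Hd. destruct (rglb_approx _ d (Hne h0) (Hbd h0) Hd) as [e [[tau [Ht ->]] He]].
        exists tau; auto. }
      assert (Hpa_le : forall h, pa h <= p h).
      { intros h0. pose proof (Hlow h0 0 (Rle_refl _)) as E. rewrite vscal_zero, vadd_zero in E. lra. }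
      assert (Hpa : sublin pa /\ forall h, pa h <= q h).
      { split; [split|].
        - intros b c. apply le_eps. intros d Hd.
          destruct (Happ b (d/2) ltac:(lra)) as [t1 [Ht1 E1]].
          destruct (Happ c (d/2) ltac:(lra)) as [t2 [Ht2 E2]].
          pose proof (Hlow (vadd b c) (t1 + t2) ltac:(lra)) as E3.
          pose proof (proj1 Hp (vadd b (vscal t1 a)) (vadd c (vscal t2 a))) as E4.
          replace (vadd (vadd b (vscal t1 a)) (vadd c (vscal t2 a))) with (vadd (vadd b c) (vscal (t1 + t2) a)) in E4.
          2:{ rewrite vscal_distr_r. rewrite <- !vadd_assoc. f_equal.
              rewrite !vadd_assoc. f_equal. apply vadd_comm. }
          lra.
        - intros t b Ht. apply Rle_antisym.
          + apply le_eps. intros d Hd.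
            destruct (Happ b (d / t) ltac:(apply Rdiv_lt_0_compat; lra)) as [tau [Htau E]].
            pose proof (Hlow (vscal t b) (t * tau) ltac:(nra)) as E2.
            replace (vadd (vscal t b) (vscal (t * tau) a)) with (vscal t (vadd b (vscal tau a))) in E2.
            2:{ rewrite vscal_distr_l, vscal_assoc. reflexivity. }
            rewrite (proj2 Hp t _ Ht) in E2.
            apply (Rmult_lt_compat_l t) in E; auto.
            replace (t * (pa b + d / t)) with (t * pa b + d) in E by (field; lra). nra.
          + apply rglb_ge; auto. intros e [tau [Htau E']]. subst e.
            pose proof (Hlow b (tau / t) ltac:(apply Rmult_le_pos; [lra| left; apply Rinv_0_lt_compat; lra])) as E.
            replace (vadd (vscal t b) (vscal tau a)) with (vscal t (vadd b (vscal (tau / t) a))).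
            2:{ rewrite vscal_distr_l, vscal_assoc. f_equal. f_equal. field. lra. }
            rewrite (proj2 Hp t _ Ht).
            apply (Rmult_le_compat_l t) in E; [|lra].
            replace (t * (p (vadd b (vscal (tau / t) a)) - tau / t * p a))
              with (t * p (vadd b (vscal (tau / t) a)) - tau * p a) in E by (field; lra). lra.
        - intros h0. pose proof (Hpa_le h0). pose proof (Hpq h0). lra. }
      assert (Hrel : Rl (exist _ p (conj Hp Hpq)) (exist _ pa Hpa)).
      { intros h0. simpl. apply Hpa_le. }
      apply Hmax in Hrel. apply (f_equal (fun s => proj1_sig s h)) in Hrel. simpl in Hrel.
      pose proof (Hlow h 1 ltac:(lra)) as E. rewrite vscal_one in E. lra. }
    assert (Hadd : forall a b, p (vadd a b) = p a + p b).
    { intros a b. pose proof (proj1 Hp a b). pose proof (Hsup b a). lra. }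
    assert (Hopp : forall a, p (vopp a) = - p a).
    { intros a. pose proof (Hadd a (vopp a)) as E. rewrite vadd_opp, sublin_zero in E; auto. lra. }
    exists p. split; [split|]; auto.
    intros t a. destruct (Rle_or_lt 0 t) as [Ht|Ht].
    + apply sublin_scal0; auto.
    + replace (vscal t a) with (vopp (vscal (- t) a)) by (rewrite vopp_scal; f_equal; ring).
      rewrite Hopp, sublin_scal0; auto; try lra.
Qed.

End HB.

Section HB2.
Context {X : Banach}.
Local Notation vadd := (vadd X).
Local Notation vscal := (vscal X).
Local Notation vopp := (vopp X).
Local Notation vzero := (vzero X).
Local Notation vnorm := (vnorm X).

Lemma HB_convex (Psi : X -> R) : convex_real Psi -> Psi vzero = 0 ->
  exists l, linear l /\ forall h, l h <= Psi h.
Proof.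
  intros Hc H0.
  assert (Hlb : forall t h, 0 < t -> - Psi (vopp h) <= Psi (vscal t h) / t).
  { intros t h Ht. set (s := / (1 + t)).
    assert (Hs : 0 <= s <= 1). { unfold s. split. left; apply Rinv_0_lt_compat; lra.
      rewrite <- Rinv_1. apply Rinv_le_contravar; lra. }
    pose proof (Hc (vscal t h) (vopp h) s Hs) as E.
    replace (vadd (vscal s (vscal t h)) (vscal (1 - s) (vopp h))) with vzero in E.
    2:{ rewrite <- vscal_m1, !vscal_assoc, <- vscal_distr_r.
        replace (s * t + (1 - s) * -1) with 0. rewrite vscal_zero; reflexivity. unfold s. field. lra. }
    rewrite H0 in E.
    assert (E2 : 0 <= Psi (vscal t h) + t * Psi (vopp h)).
    { apply (Rmult_le_compat_l (1 + t)) in E; [|lra].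
      replace ((1 + t) * (s * Psi (vscal t h) + (1 - s) * Psi (vopp h))) with
        (Psi (vscal t h) + t * Psi (vopp h)) in E by (unfold s; field; lra). lra. }
    apply (Rmult_le_reg_l t); auto. replace (t * (Psi (vscal t h) / t)) with (Psi (vscal t h)) by (field; lra).
    lra. }
  set (q := fun h => rglb (fun y => exists t, 0 < t /\ y = Psi (vscal t h) / t)).
  assert (Hbd : forall h, exists m, forall e, (exists t, 0 < t /\ e = Psi (vscal t h) / t) -> m <= e).
  { intros h. exists (- Psi (vopp h)). intros e [t [Ht ->]]. apply Hlb; auto. }
  assert (Hne : forall h, exists e, exists t, 0 < t /\ e = Psi (vscal t h) / t).
  { intros h. eexists; exists 1; split; [lra|reflexivity]. }
  assert (Hlow : forall h t, 0 < t -> q h <= Psi (vscal t h) / t).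
  { intros h t Ht. apply rglb_le; auto. exists t; auto. }
  assert (Happ : forall h d, 0 < d -> exists t, 0 < t /\ Psi (vscal t h) / t < q h + d).
  { intros h d Hd. destruct (rglb_approx _ d (Hne h) (Hbd h) Hd) as [e [[t [Ht ->]] He]]. exists t; auto. }
  assert (Hq : sublin q).
  { split.
    - intros a b. apply le_eps. intros d Hd.
      destruct (Happ a (d/2) ltac:(lra)) as [t1 [Ht1 E1]].
      destruct (Happ b (d/2) ltac:(lra)) as [t2 [Ht2 E2]].
      set (t := t1 * t2 / (t1 + t2)). set (la := t2 / (t1 + t2)).
      assert (Ht : 0 < t) by (unfold t; apply Rdiv_lt_0_compat; nra).
      assert (Hla : 0 <= la <= 1).
      { unfold la. split. left; apply Rdiv_lt_0_compat; lra.
        apply (Rmult_le_reg_r (t1 + t2)); [lra|]. replace (t2 / (t1 + t2) * (t1 + t2)) with t2 by (field; lra). lra. }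
      pose proof (Hlow (vadd a b) t Ht) as E3.
      pose proof (Hc (vscal t1 a) (vscal t2 b) la Hla) as E4.
      replace (vadd (vscal la (vscal t1 a)) (vscal (1 - la) (vscal t2 b))) with (vscal t (vadd a b)) in E4.
      2:{ rewrite vscal_distr_l, !vscal_assoc. unfold t, la. f_equal; f_equal; field; lra. }
      assert (E5 : Psi (vscal t (vadd a b)) / t <= Psi (vscal t1 a) / t1 + Psi (vscal t2 b) / t2).
      { unfold Rdiv at 1. apply (Rle_trans _ ((la * Psi (vscal t1 a) + (1 - la) * Psi (vscal t2 b)) * / t)).
        - apply Rmult_le_compat_r; auto. left; apply Rinv_0_lt_compat; auto.
        - right. unfold la, t. field. lra. }
      lra.
    - intros r h Hr. apply Rle_antisym.
      + apply le_eps. intros d Hd.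
        destruct (Happ h (d / r) ltac:(apply Rdiv_lt_0_compat; lra)) as [t [Ht E]].
        pose proof (Hlow (vscal r h) (t / r) ltac:(apply Rdiv_lt_0_compat; lra)) as E2.
        rewrite vscal_assoc in E2. replace (t / r * r) with t in E2 by (field; lra).
        replace (Psi (vscal t h) / (t / r)) with (r * (Psi (vscal t h) / t)) in E2 by (field; lra).
        apply (Rmult_lt_compat_l r) in E; auto.
        replace (r * (q h + d / r)) with (r * q h + d) in E by (field; lra). lra.
      + apply rglb_ge; auto. intros e [t [Ht ->]].
        pose proof (Hlow h (t * r) ltac:(nra)) as E. rewrite vscal_assoc.
        apply (Rmult_le_compat_l r) in E; [|lra].
        replace (r * (Psi (vscal (t * r) h) / (t * r))) with (Psi (vscal (t * r) h) / t) in E by (field; lra).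
        lra. }
  destruct (HB_sublin q Hq) as [l [Hl Hlq]].
  exists l. split; auto. intros h. eapply Rle_trans; [apply Hlq|].
  pose proof (Hlow h 1 ltac:(lra)) as E. rewrite vscal_one in E. replace (Psi h / 1) with (Psi h) in E by field.
  exact E.
Qed.

Lemma norming (h : X) : exists l, is_dual l /\ Rbar_le (dnorm l) (Finite 1) /\ l h = vnorm h /\
  forall y, Rabs (l y) <= vnorm y.
Proof.
  set (Psi := fun y => vnorm (vadd y h) - vnorm h).
  assert (Hc : convex_real Psi).
  { intros a b t Ht. unfold Psi.
    replace (vadd (vadd (vscal t a) (vscal (1 - t) b)) h) with (vadd (vscal t (vadd a h)) (vscal (1 - t) (vadd b h))).
    2:{ rewrite !vscal_distr_l. rewrite <- !vadd_assoc. f_equal.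
        rewrite (vadd_comm X (vscal t h)), <- !vadd_assoc. f_equal.
        rewrite vadd_comm, <- vscal_distr_r.
        assert (E: forall s, s = 1 -> vscal s h = h) by (intros s ->; apply vscal_one). apply E. ring. }
    pose proof (vnorm_triangle X (vscal t (vadd a h)) (vscal (1 - t) (vadd b h))) as T.
    rewrite !vnorm_scal, !Rabs_right in T by lra. lra. }
  assert (H0 : Psi vzero = 0) by (unfold Psi; rewrite vadd_zero_l; ring).
  destruct (HB_convex Psi Hc H0) as [l [[Ha Hs] Hl]].
  assert (Hb : forall y, Rabs (l y) <= vnorm y).
  { intros y. assert (F : forall z, l z <= vnorm z).
    { intros z. eapply Rle_trans; [apply Hl|]. unfold Psi. pose proof (vnorm_triangle X z h). lra. }
    pose proof (F y). pose proof (F (vopp y)). rewrite <- vscal_m1, Hs, vnorm_scal in H1.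
    replace (Rabs (-1)) with 1 in H1 by (rewrite Rabs_left; lra). apply Rabs_le. lra. }
  assert (Hd : is_dual l) by (apply (is_dual_lin _ 1); auto; intros; rewrite Rmult_1_l; auto).
  exists l. split; auto. split. apply dnorm_le_of_bound; [lra|]. intros; rewrite Rmult_1_l; auto.
  split; auto.
  apply Rle_antisym. pose proof (Hb h). pose proof (Rle_abs (l h)). lra.
  pose proof (Hl (vopp h)) as E. unfold Psi in E. rewrite (vadd_comm X (vopp h)), vadd_opp, vnorm_zero in E.
  rewrite <- vscal_m1, Hs in E. lra.
Qed.

End HB2.


Section Conv.
Context {X : Banach}.
Local Notation vadd := (vadd X).
Local Notation vscal := (vscal X).
Local Notation vopp := (vopp X).
Local Notation vzero := (vzero X).
Local Notation vnorm := (vnorm X).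

Definition lc2 (a : R) (w : X) (b : R) (v : X) : X := vadd (vscal a w) (vscal b v).

Lemma lc2_add a w b v c d : vadd (lc2 a w b v) (lc2 c w d v) = lc2 (a + c) w (b + d) v.
Proof.
  unfold lc2. rewrite !vscal_distr_r. rewrite <- !vadd_assoc. f_equal.
  rewrite !vadd_assoc. f_equal. apply vadd_comm.
Qed.

Lemma lc2_scal s a w b v : vscal s (lc2 a w b v) = lc2 (s * a) w (s * b) v.
Proof. unfold lc2. rewrite vscal_distr_l, !vscal_assoc. reflexivity. Qed.

Lemma lc2_ext a w b v a' b' : a = a' -> b = b' -> lc2 a w b v = lc2 a' w b' v.
Proof. intros -> ->; reflexivity. Qed.

Lemma lc2_w w v : lc2 1 w 0 v = w.
Proof. unfold lc2. rewrite vscal_one, vscal_zero, vadd_zero. reflexivity. Qed.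

Lemma lc2_v w v : lc2 0 w 1 v = v.
Proof. unfold lc2. rewrite vscal_one, vscal_zero, vadd_zero_l. reflexivity. Qed.

Lemma vsub_lc2 a w b v c d : vsub (lc2 a w b v) (lc2 c w d v) = lc2 (a - c) w (b - d) v.
Proof.
  unfold vsub. rewrite <- vscal_m1, lc2_scal, lc2_add. apply lc2_ext; ring.
Qed.

Lemma abs_le_split a b : Rabs a <= b -> - b <= a <= b.
Proof. intros H. pose proof (Rle_abs a). pose proof (Rle_abs (-a)). rewrite Rabs_Ropp in H1. lra. Qed.

Lemma abs_le_of a b : - b <= a -> a <= b -> Rabs a <= b.
Proof. intros; apply Rabs_le; lra. Qed.

Lemma convex_lip (p : X -> R) (x : X) xi : 0 <= xi -> convex_real p ->
  (forall u, Rabs (p u - p x) <= xi * vnorm (vsub u x)) ->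
  forall v w, Rabs (p w - p v) <= xi * vnorm (vsub w v).
Proof.
  intros Hxi Hc Hx.
  assert (One : forall v w, p w - p v <= xi * vnorm (vsub w v)).
  { intros v w. set (C := p x + xi * vnorm (vsub v x) - p v).
    assert (HC : 0 <= C). { pose proof (Hx v) as E. apply abs_le_split in E. unfold C. lra. }
    assert (Ht : forall t, 1 <= t -> p w - p v <= C / t + xi * vnorm (vsub w v)).
    { intros t Ht. set (z := lc2 t w (1 - t) v).
      set (s := / t).
      assert (Hs : 0 <= s <= 1). { unfold s. split. left; apply Rinv_0_lt_compat; lra.
        rewrite <- Rinv_1. apply Rinv_le_contravar; lra. }
      pose proof (Hc z v s Hs) as E.
      replace (vadd (vscal s z) (vscal (1 - s) v)) with w in E.
      2:{ unfold z. transitivity (vadd (lc2 (s*t) w (s*(1-t)) v) (lc2 ((1-s)*0) w ((1-s)*1) v)).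
          - rewrite lc2_add. transitivity (lc2 1 w 0 v). symmetry; apply lc2_w.
            apply lc2_ext; unfold s; field; lra.
          - rewrite <- lc2_scal, <- (lc2_scal (1-s) 0 w 1 v), lc2_v. reflexivity. }
      assert (Hz : p z <= p x + xi * (vnorm (vsub v x) + t * vnorm (vsub w v))).
      { pose proof (Hx z) as E1. apply abs_le_split in E1.
        pose proof (vsub_tri z v x) as E2.
        assert (E2' : vnorm (vsub z v) = t * vnorm (vsub w v)) by (unfold z, lc2; rewrite vsub_comb_l, vnorm_scal, Rabs_right; lra).
        nra. }
      assert (E' : p w - p v <= s * (p z - p v)) by lra.
      unfold s in E'. unfold C. unfold Rdiv.
      assert (E'' : / t * (p z - p v) <= / t * (p x + xi * vnorm (vsub v x) - p v) + xi * vnorm (vsub w v)).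
      { replace (/ t * (p x + xi * vnorm (vsub v x) - p v) + xi * vnorm (vsub w v))
          with (/ t * (p x + xi * (vnorm (vsub v x) + t * vnorm (vsub w v)) - p v)) by (field; lra).
        apply Rmult_le_compat_l. left; apply Rinv_0_lt_compat; lra. lra. }
      lra. }
    apply le_eps. intros d Hd. specialize (Ht (C / d + 1)).
    assert (C / (C / d + 1) <= d).
    { apply (Rmult_le_reg_r (C / d + 1)). assert (0 <= C / d) by (apply Rmult_le_pos; [lra|left; apply Rinv_0_lt_compat; lra]). lra.
      replace (C / (C / d + 1) * (C / d + 1)) with C by (field; split; [lra|]; assert (0 <= C / d) by (apply Rmult_le_pos; [lra|left; apply Rinv_0_lt_compat; lra]); lra).
      replace (d * (C / d + 1)) with (C + d) by (field; lra). lra. }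
    assert (1 <= C / d + 1) by (assert (0 <= C / d) by (apply Rmult_le_pos; [lra|left; apply Rinv_0_lt_compat; lra]); lra).
    specialize (Ht H0). lra. }
  intros v w. apply abs_le_of. pose proof (One w v). rewrite vnorm_sub_sym in H. lra. apply One.
Qed.

End Conv.


Definition dl (n : nat) : R := / (INR n + 1).

Lemma dl_pos n : 0 < dl n.
Proof. unfold dl. apply Rinv_0_lt_compat. pose proof (pos_INR n). lra. Qed.

Lemma dl_mono n m : (n <= m)%nat -> dl m <= dl n.
Proof.
  intros H. unfold dl. apply Rinv_le_contravar. pose proof (pos_INR n); lra.
  apply le_INR in H. lra.
Qed.

Lemma dl_small r : 0 < r -> exists n, dl n < r.
Proof.
  intros Hr. destruct (archimed_cor1 r Hr) as [N [HN HN0]]. exists N. unfold dl.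
  eapply Rle_lt_trans; [|exact HN]. apply Rinv_le_contravar. apply lt_0_INR; auto. lra.
Qed.

Section Ekeland.
Context {X : Banach}.
Local Notation vadd := (vadd X).
Local Notation vscal := (vscal X).
Local Notation vopp := (vopp X).
Local Notation vzero := (vzero X).
Local Notation vnorm := (vnorm X).

Lemma ekeland (phi : X -> Rbar) (u0 : X) (a0 lam : R) :
  lsc phi -> (forall u, Rbar_le (Finite 0) (phi u)) -> phi u0 = Finite a0 -> 0 < lam -> 0 < a0 ->
  exists v b, phi v = Finite b /\ vnorm (vsub v u0) <= lam /\ b <= a0 /\
    forall w c, phi w = Finite c -> b <= c + (a0 / lam) * vnorm (vsub w v).
Proof.
  intros Hlsc Hpos Hu0 Hlam Ha0.
  set (k := a0 / lam).
  assert (Hk : 0 < k) by (unfold k; apply Rdiv_lt_0_compat; auto).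
  set (val := fun w => match phi w with Finite r => r | _ => 0 end).
  set (fin := fun w => exists c, phi w = Finite c).
  assert (Hval : forall w c, phi w = Finite c -> val w = c). { intros w c H. unfold val. rewrite H. auto. }
  assert (Hval0 : forall w, 0 <= val w).
  { intros w. unfold val. pose proof (Hpos w). destruct (phi w); simpl in *; lra. }
  set (S := fun w y => fin y /\ val y + k * vnorm (vsub y w) <= val w).
  assert (Srefl : forall w, fin w -> S w w). { intros w Hw. split; auto. rewrite vsub_self, vnorm_zero. lra. }
  assert (Strans : forall w y z, S w y -> S y z -> S w z).
  { intros w y z [_ H1] [Hz H2]. split; auto. pose proof (vsub_tri z y w). nra. }
  set (I := fun w => rglb (fun r => exists y, S w y /\ r = val y)).
  assert (Ibd : forall w, exists m, forall e, (exists y, S w y /\ e = val y) -> m <= e).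
  { intros w. exists 0. intros e [y [_ ->]]. apply Hval0. }
  assert (Ilow : forall w y, S w y -> I w <= val y).
  { intros w y Hy. apply rglb_le; auto. exists y; auto. }
  assert (Hstep : forall w n, exists y, fin w -> S w y /\ val y < I w + dl n).
  { intros w n. destruct (classic (fin w)) as [Hw|Hw].
    - destruct (rglb_approx (fun r => exists y, S w y /\ r = val y) (dl n)) as [e [[y [Hy ->]] He]].
      + exists (val w). exists w. split; auto.
      + apply Ibd.
      + apply dl_pos.
      + exists y. intros _. split; auto.
    - exists w. intros H; contradiction. }
  set (next := fun w n => epsilon (inhabits w) (fun y => fin w -> S w y /\ val y < I w + dl n)).
  assert (Hnext : forall w n, fin w -> S w (next w n) /\ val (next w n) < I w + dl n).
  { intros w n Hw. unfold next. apply (epsilon_spec (inhabits w) (fun y => fin w -> S w y /\ val y < I w + dl n)); auto. }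
  set (vs := fix vs (n : nat) : X := match n with O => u0 | Datatypes.S k => next (vs k) k end).
  assert (Hfin0 : fin u0) by (exists a0; auto).
  assert (F1 : forall n, fin (vs n) /\ S (vs n) (vs (Datatypes.S n)) /\ val (vs (Datatypes.S n)) < I (vs n) + dl n).
  { induction n as [|n IH].
    - simpl. destruct (Hnext u0 O Hfin0) as [H1 H2]. split; auto.
    - destruct IH as [_ [[Hf _] _]]. change (vs (Datatypes.S (Datatypes.S n))) with (next (vs (Datatypes.S n)) (Datatypes.S n)).
      destruct (Hnext _ (Datatypes.S n) Hf) as [H1 H2]. split; auto. }
  assert (F3 : forall n m, (n <= m)%nat -> S (vs n) (vs m)).
  { intros n m Hnm. induction Hnm. apply Srefl, F1. eapply Strans; [exact IHHnm| apply F1]. }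
  assert (F4 : forall n y, S (vs (Datatypes.S n)) y -> k * vnorm (vsub y (vs (Datatypes.S n))) <= dl n).
  { intros n y Hy. assert (Hy2 : S (vs n) y) by (eapply Strans; [apply F1|exact Hy]).
    pose proof (Ilow _ _ Hy2). destruct (F1 n) as [_ [_ H3]]. destruct Hy as [_ H4]. lra. }
  assert (F5 : forall n m, (Datatypes.S n <= m)%nat -> vnorm (vsub (vs m) (vs (Datatypes.S n))) <= dl n / k).
  { intros n m Hnm. pose proof (F4 n (vs m) (F3 _ _ Hnm)).
    apply (Rmult_le_reg_l k); auto. replace (k * (dl n / k)) with (dl n) by (field; lra). lra. }
  destruct (vcomplete X vs) as [l Hl].
  { intros e He. destruct (dl_small (e * k / 2)) as [n Hn].
    { apply Rmult_lt_0_compat; [nra|lra]. }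
    exists (Datatypes.S n). intros m j Hm Hj.
    pose proof (F5 n m Hm). pose proof (F5 n j Hj).
    pose proof (vsub_tri (vs m) (vs (Datatypes.S n)) (vs j)) as T. rewrite (vnorm_sub_sym (vs (Datatypes.S n))) in T.
    change (vadd (vs m) (vopp (vs j))) with (vsub (vs m) (vs j)).
    assert (dl n / k < e / 2).
    { apply (Rmult_lt_reg_l k); auto. replace (k * (dl n / k)) with (dl n) by (field; lra). lra. }
    lra. }
  assert (Hl' : forall e, 0 < e -> exists N, forall n, (N <= n)%nat -> vnorm (vsub (vs n) l) < e) by exact Hl.
  clear Hl.
  assert (F6 : forall n, S (vs n) l).
  { intros n. apply NNPP. intro Hn.
    set (B := val (vs n) - k * vnorm (vsub l (vs n))).
    assert (Hex : exists eta, 0 < eta /\ Rbar_lt (Finite (B + eta)) (phi l)).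
    { destruct (phi l) as [c| |] eqn:El.
      - exists ((c - B) / 2). assert (c > B).
        { apply Rnot_le_lt. intro Hc. apply Hn. split. exists c; auto. rewrite (Hval _ _ El). unfold B in Hc. lra. }
        split. lra. apply Rbar_lt_fin. lra.
      - exists 1. split. lra. split; simpl; auto. discriminate.
      - pose proof (Hpos l) as P. rewrite El in P. simpl in P. contradiction. }
    destruct Hex as [eta [Heta Hlt]].
    destruct (Hlsc l (B + eta) Hlt) as [d [Hd Hnb]].
    destruct (Hl' (Rmin d (eta / k))) as [N HN].
    { apply Rmin_pos; auto. apply Rdiv_lt_0_compat; auto. }
    set (m := Nat.max n N).
    assert (Hm : vnorm (vsub (vs m) l) < Rmin d (eta / k)) by (apply HN; unfold m; lia).
    assert (Hm1 : vnorm (vsub (vs m) l) < d) by (pose proof (Rmin_l d (eta / k)); lra).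
    assert (Hm2 : k * vnorm (vsub (vs m) l) < eta).
    { pose proof (Rmin_r d (eta / k)). apply (Rmult_lt_compat_l k) in Hm; auto.
      assert (k * Rmin d (eta / k) <= eta).
      { apply (Rle_trans _ (k * (eta / k))). apply Rmult_le_compat_l; lra. right; field; lra. }
      lra. }
    specialize (Hnb (vs m) Hm1).
    destruct (F3 n m ltac:(unfold m; lia)) as [[c Hc] Hs].
    rewrite Hc in Hnb. apply Rbar_lt_fin in Hnb. rewrite (Hval _ _ Hc) in Hs.
    pose proof (vsub_tri l (vs m) (vs n)) as T. rewrite (vnorm_sub_sym l (vs m)) in T.
    unfold B in Hnb. nra. }
  destruct (F6 O) as [[b Hb] Hs0]. simpl in Hs0.
  rewrite (Hval _ _ Hb), (Hval _ _ Hu0) in Hs0.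
  assert (Hb0 : 0 <= b) by (rewrite <- (Hval _ _ Hb); apply Hval0).
  exists l, b. split; auto. split; [|split].
  - apply (Rmult_le_reg_l k); auto. unfold k at 2. replace (a0 / lam * lam) with a0 by (field; lra).
    lra.
  - pose proof (vnorm_nonneg (vsub l u0)). nra.
  - intros w c Hc. fold k. apply Rnot_lt_le. intro Hlt.
    assert (Hw : S l w). { split. exists c; auto. rewrite (Hval _ _ Hc), (Hval _ _ Hb). lra. }
    assert (Hz : vnorm (vsub w l) <= 0).
    { apply le_eps. intros d Hd. destruct (dl_small (d * k / 2)) as [n Hn]. apply Rmult_lt_0_compat; [nra|lra].
      pose proof (F4 n w (Strans _ _ _ (F6 _) Hw)) as E1.
      pose proof (F4 n l (F6 _)) as E2.
      pose proof (vsub_tri w (vs (Datatypes.S n)) l) as T. rewrite (vnorm_sub_sym (vs (Datatypes.S n)) l) in T.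
      assert (k * vnorm (vsub w l) <= 2 * dl n) by nra.
      apply (Rmult_le_reg_l k); auto. nra. }
    assert (w = l). { apply vnorm_eq0_sub. pose proof (vnorm_nonneg (vsub w l)). lra. }
    subst w. rewrite Hb in Hc. inversion Hc. subst c. rewrite vsub_self, vnorm_zero in Hlt. lra.
Qed.

End Ekeland.


Section Sub.
Context {X : Banach}.
Local Notation vadd := (vadd X).
Local Notation vscal := (vscal X).
Local Notation vopp := (vopp X).
Local Notation vzero := (vzero X).
Local Notation vnorm := (vnorm X).

Lemma vadd_swap4 (a b c d : X) : vadd (vadd a b) (vadd c d) = vadd (vadd a c) (vadd b d).
Proof.
  rewrite <- !vadd_assoc. f_equal. rewrite !vadd_assoc. f_equal. apply vadd_comm.
Qed.

Lemma V1 t s (a b c d : X) :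
  vsub (vadd (vscal t a) (vscal s b)) (vadd (vscal t c) (vscal s d)) = vadd (vscal t (vsub a c)) (vscal s (vsub b d)).
Proof.
  rewrite !vsub_scal. unfold vsub. rewrite vopp_add. apply vadd_swap4.
Qed.

Lemma V2 t (v : X) : vadd (vscal t v) (vscal (1 - t) v) = v.
Proof. rewrite <- vscal_distr_r. replace (t + (1 - t)) with 1 by ring. apply vscal_one. Qed.

Lemma V3 (w v : X) : vsub w (vsub w v) = v.
Proof.
  unfold vsub. rewrite vopp_add, vopp_opp, vadd_assoc, vadd_opp, vadd_zero_l. reflexivity.
Qed.

Lemma V5 (v y : X) : vsub (vadd v y) v = y.
Proof. unfold vsub. rewrite (vadd_comm X v y), <- vadd_assoc, vadd_opp, vadd_zero. reflexivity. Qed.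

Lemma V6 (w h : X) : vsub (vsub w h) w = vopp h.
Proof.
  unfold vsub. rewrite (vadd_comm X w (vopp h)), <- vadd_assoc, vadd_opp, vadd_zero. reflexivity.
Qed.

Lemma convex_lc_norm t (z1 z2 v : X) : 0 <= t <= 1 ->
  vnorm (vsub (vadd (vscal t z1) (vscal (1 - t) z2)) v) <= t * vnorm (vsub z1 v) + (1 - t) * vnorm (vsub z2 v).
Proof.
  intros Ht. rewrite <- (V2 t v) at 1. rewrite V1.
  eapply Rle_trans; [apply vnorm_triangle|]. rewrite !vnorm_scal, !Rabs_right by lra. lra.
Qed.

Lemma subgrad_exists (f : X -> Rbar) (p : X -> R) (v : X) (fv c L : R) :
  (forall u, f u <> m_infty) -> convex f -> convex_real p -> f v = Finite fv -> 0 <= c -> 0 <= L ->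
  (forall a b, Rabs (p a - p b) <= L * vnorm (vsub a b)) ->
  (forall w be, f w = Finite be -> fv + p v <= be + p w + c * vnorm (vsub w v)) ->
  exists us, subdiff f v us /\ Rbar_le (dnorm us) (Finite (L + c)).
Proof.
  intros Hm Hf Hp Hv Hc HL Hlip Hmin.
  set (k := fun w => fv + p v - p w - c * vnorm (vsub w v)).
  assert (Hkv : k v = fv) by (unfold k; rewrite vsub_self, vnorm_zero; ring).
  assert (Hfk : forall w be, f w = Finite be -> k w <= be) by (intros w be H; unfold k; pose proof (Hmin w be H); lra).
  set (E := fun h r => exists w be, f w = Finite be /\ r = be - k (vsub w h)).
  assert (Hdiff : forall w h, k w - k (vsub w h) >= - (L + c) * vnorm h).
  { intros w h. unfold k. pose proof (Hlip (vsub w h) w) as E1. rewrite V6, vnorm_opp in E1.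
    apply abs_le_split in E1.
    pose proof (vsub_tri w (vsub w h) v) as E2. rewrite V3 in E2. nra. }
  assert (Ene : forall h, exists r, E h r) by (intros h; exists (fv - k (vsub v h)); exists v, fv; auto).
  assert (Ebd : forall h, exists m, forall r, E h r -> m <= r).
  { intros h. exists (- (L + c) * vnorm h). intros r [w [be [Hw ->]]]. pose proof (Hfk w be Hw). pose proof (Hdiff w h). lra. }
  set (Psi := fun h => rglb (E h)).
  assert (Plow : forall h w be, f w = Finite be -> Psi h <= be - k (vsub w h)).
  { intros h w be Hw. apply rglb_le; auto. exists w, be; auto. }
  assert (Papp : forall h d, 0 < d -> exists w be, f w = Finite be /\ be - k (vsub w h) < Psi h + d).
  { intros h d Hd. destruct (rglb_approx (E h) d (Ene h) (Ebd h) Hd) as [r [[w [be [Hw ->]]] Hr]]. exists w, be; auto. }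
  assert (P0 : Psi vzero = 0).
  { apply Rle_antisym.
    - pose proof (Plow vzero v fv Hv). rewrite vsub_zero, Hkv in H. lra.
    - apply rglb_ge; auto. intros r [w [be [Hw ->]]]. rewrite vsub_zero. pose proof (Hfk w be Hw). lra. }
  assert (Pconv : convex_real Psi).
  { intros h1 h2 t Ht. apply le_eps. intros d Hd.
    destruct (Papp h1 d Hd) as [w1 [b1 [Hw1 E1]]]. destruct (Papp h2 d Hd) as [w2 [b2 [Hw2 E2]]].
    set (w := vadd (vscal t w1) (vscal (1 - t) w2)).
    pose proof (Hf w1 w2 b1 b2 t Ht) as Hfw. rewrite Hw1, Hw2 in Hfw. specialize (Hfw (Rle_refl _) (Rle_refl _)).
    fold w in Hfw. destruct (f w) as [be| |] eqn:Ew; simpl in Hfw; try contradiction.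
    2:{ exfalso; apply (Hm w); auto. }
    pose proof (Plow (vadd (vscal t h1) (vscal (1 - t) h2)) w be Ew) as E3.
    unfold w in E3. rewrite V1 in E3.
    assert (Hkc : k (vadd (vscal t (vsub w1 h1)) (vscal (1 - t) (vsub w2 h2))) >=
                  t * k (vsub w1 h1) + (1 - t) * k (vsub w2 h2)).
    { unfold k. pose proof (Hp (vsub w1 h1) (vsub w2 h2) t Ht).
      pose proof (convex_lc_norm t (vsub w1 h1) (vsub w2 h2) v Ht). nra. }
    nra. }
  destruct (HB_convex Psi Pconv P0) as [l [[Ha Hs] Hl]].
  assert (Hup : forall w be, f w = Finite be -> fv + l (vsub w v) <= be).
  { intros w be Hw. pose proof (Hl (vsub w v)). pose proof (Plow (vsub w v) w be Hw). rewrite V3, Hkv in H0. lra. }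
  assert (Hlo : forall y, - (L + c) * vnorm y <= l y).
  { intros y. pose proof (Hl (vsub v (vadd v y))) as E1. pose proof (Plow (vsub v (vadd v y)) v fv Hv) as E2.
    rewrite V3 in E2. unfold k in E2. rewrite V5 in E2.
    pose proof (Hlip (vadd v y) v) as E3. rewrite V5 in E3. apply abs_le_split in E3.
    assert (Ey : vsub v (vadd v y) = vopp y) by (rewrite vsub_swap, V5; reflexivity).
    rewrite Ey in E1, E2. rewrite <- vscal_m1, Hs in E1. rewrite vscal_m1 in E1. nra. }
  assert (Hbd : forall y, Rabs (l y) <= (L + c) * vnorm y).
  { intros y. apply abs_le_of. pose proof (Hlo y). lra.
    pose proof (Hlo (vopp y)). rewrite <- vscal_m1, Hs, vnorm_scal in H.
    replace (Rabs (-1)) with 1 in H by (rewrite Rabs_left; lra). lra. }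
  assert (Hd : is_dual l) by (apply (is_dual_lin _ (L + c)); auto).
  exists l. split.
  - split; auto. exists fv. split; auto. intros u. destruct (f u) as [be| |] eqn:Eu; simpl; auto.
    + pose proof (Hup u be Eu). lra.
    + exfalso; apply (Hm u); auto.
  - apply dnorm_le_of_bound; [lra|]. exact Hbd.
Qed.

Lemma subdiff_val (f : X -> Rbar) v phi fv : f v = Finite fv -> subdiff f v phi ->
  is_dual phi /\ forall u be, f u = Finite be -> phi (vsub u v) + fv <= be.
Proof.
  intros Hv [Hd [fx [Hfx H]]]. rewrite Hv in Hfx. inversion Hfx; subst fx. split; auto.
  intros u be Hu. specialize (H u). rewrite Hu in H. exact H.
Qed.

Lemma subdiff_intro (f : X -> Rbar) v phi fv : (forall u, f u <> m_infty) -> f v = Finite fv -> is_dual phi ->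
  (forall u be, f u = Finite be -> phi (vsub u v) + fv <= be) -> subdiff f v phi.
Proof.
  intros Hm Hv Hd H. split; auto. exists fv; split; auto. intros u. destruct (f u) as [be| |] eqn:Eu; simpl; auto.
  exfalso; apply (Hm u); auto.
Qed.

Lemma subdiff_closed (f : X -> Rbar) v phi fv : (forall u, f u <> m_infty) -> f v = Finite fv ->
  dclosure (subdiff f v) phi -> subdiff f v phi.
Proof.
  intros Hm Hv [Hd Hcl]. apply (subdiff_intro f v phi fv); auto.
  intros u be Hu. apply Rnot_lt_le. intro Hlt.
  set (g := phi (vsub u v) + fv - be).
  destruct (Hcl (g / (vnorm (vsub u v) + 1))) as [psi [Hpsi Hlt2]].
  { apply Rdiv_lt_0_compat. unfold g; lra. pose proof (vnorm_nonneg (vsub u v)); lra. }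
  destruct (subdiff_val f v psi fv Hv Hpsi) as [Hdp Hp].
  pose proof (Hp u be Hu).
  pose proof (dnorm_lt_bound _ _ (is_dual_dsub _ _ Hdp Hd) Hlt2 (vsub u v)) as B. unfold dsub in B.
  apply abs_le_split in B.
  assert (g / (vnorm (vsub u v) + 1) * vnorm (vsub u v) < g).
  { pose proof (vnorm_nonneg (vsub u v)).
    apply (Rmult_lt_reg_r (vnorm (vsub u v) + 1)); [lra|].
    replace (g / (vnorm (vsub u v) + 1) * vnorm (vsub u v) * (vnorm (vsub u v) + 1)) with (g * vnorm (vsub u v)) by (field; lra).
    unfold g in *. nra. }
  unfold g in *. lra.
Qed.

Lemma subdiff_seg (f : X -> Rbar) v (y : X -> R) s s' : (forall u, f u <> m_infty) ->
  subdiff f v dzero -> subdiff f v (fun h => s * y h) -> 0 <= s' <= s -> is_dual y ->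
  subdiff f v (fun h => s' * y h).
Proof.
  intros Hm H0 Hs Hs' Hy. destruct H0 as [Hd0 [fv [Hv H0]]].
  destruct (subdiff_val f v _ fv Hv Hs) as [_ Hs2].
  apply (subdiff_intro f v _ fv); auto.
  - assert (E : (fun h => s' * y h) = (fun h => s' * y h + 0 * y h)) by (apply functional_extensionality; intros; ring).
    rewrite E. apply is_dual_comb; auto.
  - intros u be Hu. pose proof (Hs2 u be Hu). specialize (H0 u). rewrite Hu in H0. simpl in H0. unfold dzero in H0.
    destruct (Rle_or_lt 0 (y (vsub u v))); nra.
Qed.

End Sub.


Section Main.
Context {X : Banach}.
Local Notation vadd := (vadd X).
Local Notation vscal := (vscal X).
Local Notation vopp := (vopp X).
Local Notation vzero := (vzero X).
Local Notation vnorm := (vnorm X).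

Lemma Er_fam_mono (F G : (X -> Rbar) -> Prop) : (forall g, F g -> G g) ->
  Rbar_le (Er_fam G) (Er_fam F).
Proof.
  intros H. unfold Er_fam. apply inf_greatest. intros y [g [Hg ->]]. apply inf_lower. exists g; auto.
Qed.

Lemma lsc_sum (f : X -> Rbar) (p : X -> R) L : lsc f -> (forall u, f u <> m_infty) -> 0 <= L ->
  (forall a b, Rabs (p a - p b) <= L * vnorm (vsub a b)) ->
  lsc (fun u => Rbar_addr (p u) (f u)).
Proof.
  intros Hl Hm HL Hp x a Ha.
  destruct (f x) as [be| |] eqn:Ex; simpl in Ha.
  - apply Rbar_lt_fin in Ha. set (eta := (p x + be - a) / 2).
    assert (Heta : 0 < eta) by (unfold eta; lra).
    destruct (Hl x (be - eta)) as [d1 [Hd1 H1]]. { rewrite Ex. apply Rbar_lt_fin. lra. }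
    exists (Rmin d1 (eta / (L + 1))). split. apply Rmin_pos; auto. apply Rdiv_lt_0_compat; lra.
    intros y Hy. pose proof (Rmin_l d1 (eta / (L + 1))). pose proof (Rmin_r d1 (eta / (L + 1))).
    specialize (H1 y ltac:(lra)).
    assert (Hpy : p x - eta < p y).
    { pose proof (Hp y x) as E. apply abs_le_split in E.
      assert (L * vnorm (vsub y x) < eta).
      { apply (Rle_lt_trans _ ((L + 1) * vnorm (vsub y x))). pose proof (vnorm_nonneg (vsub y x)). nra.
        apply (Rmult_lt_reg_l (/ (L + 1))). apply Rinv_0_lt_compat; lra.
        replace (/ (L + 1) * ((L + 1) * vnorm (vsub y x))) with (vnorm (vsub y x)) by (field; lra).
        replace (/ (L + 1) * eta) with (eta / (L + 1)) by (unfold Rdiv; ring). lra. }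
      lra. }
    destruct (f y) as [c| |]; simpl in *.
    + apply Rbar_lt_fin in H1. apply Rbar_lt_fin. unfold eta in *. lra.
    + split; simpl; auto. discriminate.
    + destruct H1 as [H1 _]. simpl in H1. contradiction.
  - destruct (Hl x (a - p x + 1)) as [d1 [Hd1 H1]]. { rewrite Ex. split; simpl; auto. discriminate. }
    exists (Rmin d1 (1 / (L + 1))). split. apply Rmin_pos; auto. apply Rdiv_lt_0_compat; lra.
    intros y Hy. pose proof (Rmin_l d1 (1 / (L + 1))). pose proof (Rmin_r d1 (1 / (L + 1))).
    specialize (H1 y ltac:(lra)).
    assert (Hpy : p x - 1 < p y).
    { pose proof (Hp y x) as E. apply abs_le_split in E.
      assert (L * vnorm (vsub y x) < 1).
      { apply (Rle_lt_trans _ ((L + 1) * vnorm (vsub y x))). pose proof (vnorm_nonneg (vsub y x)). nra.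
        apply (Rmult_lt_reg_l (/ (L + 1))). apply Rinv_0_lt_compat; lra.
        replace (/ (L + 1) * ((L + 1) * vnorm (vsub y x))) with (vnorm (vsub y x)) by (field; lra).
        replace (/ (L + 1) * 1) with (1 / (L + 1)) by (unfold Rdiv; ring). lra. }
      lra. }
    destruct (f y) as [c| |]; simpl in *.
    + apply Rbar_lt_fin in H1. apply Rbar_lt_fin. lra.
    + split; simpl; auto. discriminate.
    + destruct H1 as [H1 _]. simpl in H1. contradiction.
  - exfalso; apply (Hm x); auto.
Qed.

Lemma dzero_eq (y : X -> R) : (fun h => 0 * y h) = dzero.
Proof. apply functional_extensionality; intros; unfold dzero; ring. Qed.

Lemma ball_in (f : X -> Rbar) x : (forall u, f u <> m_infty) -> f x = Finite 0 ->
  dinterior (subdiff f x) dzero -> forall ys, is_dual ys ->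
  Rbar_lt (dnorm ys) (ddist0 (dboundary (subdiff f x))) -> subdiff f x ys.
Proof.
  intros Hm Hx Hint ys Hys Hlt. apply NNPP. intro Hn.
  set (C := subdiff f x).
  assert (C0 : C dzero).
  { destruct Hint as [_ [r [Hr Hb]]]. apply Hb. apply is_dual_zero.
    apply (dnorm_lt_of_bound _ 0); auto; try lra. intros h. unfold dsub, dzero. rewrite Rminus_0_r, Rabs_R0. lra. }
  destruct (dnorm_fin _ Hys) as [n [Hn1 [Hn2 Hn3]]].
  set (S := fun s => 0 <= s <= 1 /\ C (fun h => s * ys h)).
  assert (HS0 : S 0) by (split; [lra|]; unfold C; rewrite dzero_eq; exact C0).
  assert (Hbnd : bound S) by (exists 1; intros s [Hs _]; lra).
  destruct (completeness S Hbnd (ex_intro _ 0 HS0)) as [s0 [Hub Hleast]].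
  assert (Hs0 : 0 <= s0 <= 1).
  { split. apply Hub; auto. apply Hleast. intros s [Hs _]; lra. }
  assert (Hdown : forall s, 0 <= s < s0 -> S s).
  { intros s Hs. apply NNPP. intro HnS.
    assert (s0 <= s).
    { apply Hleast. intros s1 Hs1. apply Rnot_lt_le. intro Hlt1. apply HnS. split; [lra|].
      apply (subdiff_seg f x ys s1 s); auto. destruct Hs1; auto. destruct Hs1; lra. }
    lra. }
  set (zs := fun h => s0 * ys h).
  assert (Hzd : is_dual zs).
  { unfold zs. assert (E : (fun h => s0 * ys h) = (fun h => s0 * ys h + 0 * ys h)) by (apply functional_extensionality; intros; ring).
    rewrite E. apply is_dual_comb; auto. }
  assert (Hscal : forall s, 0 <= s -> Rbar_le (dnorm (dsub (fun h => s * ys h) zs)) (Finite (Rabs (s - s0) * n))).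
  { intros s Hs. apply dnorm_le_of_bound. apply Rmult_le_pos; [apply Rabs_pos|lra].
    intros h. unfold dsub, zs. replace (s * ys h - s0 * ys h) with ((s - s0) * ys h) by ring.
    rewrite Rabs_mult. pose proof (Hn3 h). pose proof (Rabs_pos (s - s0)). nra. }
  assert (Hcl : dclosure C zs).
  { split; auto. intros r Hr.
    destruct (Rle_lt_dec s0 0) as [Hz|Hz].
    - exists (fun h => 0 * ys h). split. unfold C; rewrite dzero_eq; exact C0.
      eapply Rbar_le_lt_trans. apply (Hscal 0); lra. apply Rbar_lt_fin.
      replace s0 with 0 by lra. rewrite Rminus_0_r, Rabs_R0. lra.
    - set (s := Rmax 0 (s0 - r / (2 * (n + 1)))).
      assert (Hs : 0 <= s < s0).
      { unfold s. split. apply Rmax_l. apply Rmax_lub_lt; auto.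
        assert (0 < r / (2 * (n + 1))) by (apply Rdiv_lt_0_compat; lra). lra. }
      exists (fun h => s * ys h). split. apply Hdown; auto.
      eapply Rbar_le_lt_trans. apply Hscal; lra. apply Rbar_lt_fin.
      rewrite Rabs_left by lra.
      assert (s0 - s <= r / (2 * (n + 1))).
      { unfold s. pose proof (Rmax_r 0 (s0 - r / (2 * (n + 1)))). lra. }
      assert ((s0 - s) * n <= r / (2 * (n + 1)) * n) by nra.
      assert (r / (2 * (n + 1)) * n < r).
      { apply (Rmult_lt_reg_r (2 * (n + 1))). lra.
        replace (r / (2 * (n + 1)) * n * (2 * (n + 1))) with (r * n) by (field; lra). nra. }
      lra. }
  assert (HzC : C zs) by (apply (subdiff_closed f x zs 0); auto).
  assert (Hnint : ~ dinterior C zs).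
  { intros [_ [r [Hr Hb]]].
    destruct (Rlt_le_dec s0 1) as [Hs1|Hs1].
    - set (s1 := Rmin 1 (s0 + r / (2 * (n + 1)))).
      assert (Hs1' : s0 < s1 <= 1).
      { unfold s1. split. apply Rmin_glb_lt; auto. assert (0 < r / (2 * (n + 1))) by (apply Rdiv_lt_0_compat; lra). lra.
        apply Rmin_l. }
      assert (S s1).
      { split; [lra|]. apply Hb.
        - assert (E : (fun h => s1 * ys h) = (fun h => s1 * ys h + 0 * ys h)) by (apply functional_extensionality; intros; ring).
          rewrite E. apply is_dual_comb; auto.
        - eapply Rbar_le_lt_trans. apply Hscal; lra. apply Rbar_lt_fin.
          rewrite Rabs_right by lra.
          assert (s1 - s0 <= r / (2 * (n + 1))).
          { unfold s1. pose proof (Rmin_r 1 (s0 + r / (2 * (n + 1)))). lra. }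
          assert ((s1 - s0) * n <= r / (2 * (n + 1)) * n) by nra.
          assert (r / (2 * (n + 1)) * n < r).
          { apply (Rmult_lt_reg_r (2 * (n + 1))). lra.
            replace (r / (2 * (n + 1)) * n * (2 * (n + 1))) with (r * n) by (field; lra). nra. }
          lra. }
      assert (s1 <= s0) by (apply Hub; auto). lra.
    - assert (s0 = 1) by lra. apply Hn. unfold C in HzC. unfold zs in HzC. rewrite H in HzC.
      replace ys with (fun h => 1 * ys h). exact HzC. apply functional_extensionality; intros; ring. }
  assert (Hbd : dboundary C zs) by (split; auto).
  assert (Hle : Rbar_le (ddist0 (dboundary C)) (dnorm ys)).
  { apply (Rbar_le_trans _ (dnorm zs)). apply inf_lower. exists zs; auto.
    rewrite Hn1. apply dnorm_le_of_bound; auto. intros h. unfold zs. rewrite Rabs_mult, Rabs_right by lra.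
    pose proof (Hn3 h). pose proof (Rabs_pos (ys h)). pose proof (vnorm_nonneg h). nra. }
  apply (Rbar_lt_not_le _ _ Hlt). exact Hle.
Qed.

End Main.


Section Parts.
Context {X : Banach}.
Local Notation vadd := (vadd X).
Local Notation vscal := (vscal X).
Local Notation vopp := (vopp X).
Local Notation vzero := (vzero X).
Local Notation vnorm := (vnorm X).

Lemma lin_convex (xs : X -> R) x : is_dual xs -> convex_real (fun u => xs (vsub u x)).
Proof.
  intros Hd a b t Ht. rewrite !(dual_sub _ Hd), (dual_comb _ Hd). right; ring.
Qed.

Lemma wl_sub_w (f : X -> Rbar) eps : forall g, Ptb_wl f eps g -> Ptb_w f eps g.
Proof.
  intros g [x [xs [Hx [Hd [Hn Hg]]]]]. split.
  - exists x. unfold Sf. rewrite Hg. unfold Sf_eq in Hx. rewrite Hx, vsub_self, (dual_zero _ Hd). simpl; lra.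
  - exists (fun u => xs (vsub u x)). split; [apply lin_convex; auto|]. split; auto.
    exists x. split; auto. intros u. rewrite vsub_self, (dual_zero _ Hd), Rminus_0_r.
    apply dnorm_bound; auto.
Qed.

Lemma l_sub (f : X -> Rbar) eps : forall g, Ptb_l f eps g -> Ptb f eps g.
Proof.
  intros g [x [xi [xs [Hx [Hxi [Hd [Hn [Hc Hg]]]]]]]]. split.
  - exists x. unfold Sf. rewrite Hg. unfold Sf_eq in Hx. rewrite Hx, vsub_self, (dual_zero _ Hd). simpl; lra.
  - exists (fun u => xs (vsub u x)). split; [apply lin_convex; auto|]. split; auto.
    exists x, xi. split; auto. split; auto. split.
    + rewrite vsub_self, (dual_zero _ Hd), Rabs_R0. exact Hc.
    + intros u. rewrite vsub_self, (dual_zero _ Hd), Rminus_0_r. apply dnorm_bound; auto.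
Qed.

Lemma part2 (f : X -> Rbar) eps : Gamma0 f -> 0 <= eps ->
  Rbar_lt (Finite 0) (Er_fam (Ptb_wl f eps)) -> Rbar_le (Finite eps) (subdiff_bd f).
Proof.
  intros [[_ Hm] [Hcv Hlsc]] Heps Hpos. apply NNPP. intro Hn.
  destruct (inf_lt_ex _ _ Hn) as [y [[x [Hx ->]] Hy]].
  destruct (inf_lt_ex _ _ Hy) as [y' [[xst [Hb ->]] Hy']].
  destruct Hb as [Hcl Hnint]. pose proof (proj1 Hcl) as Hxd.
  destruct (dnorm_fin _ Hxd) as [n [Hn1 [Hn2 Hn3]]]. rewrite Hn1 in Hy'. simpl in Hy'.
  assert (Hnlt : n < eps) by lra.
  unfold Sf_eq in Hx.
  assert (Hxs : subdiff f x xst) by (apply (subdiff_closed f x xst 0); auto).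
  destruct (subdiff_val f x xst 0 Hx Hxs) as [_ Hxs2].
  assert (Key : forall r, 0 < r -> r <= eps - n -> Rbar_le (Er_fam (Ptb_wl f eps)) (Finite (2 * r))).
  { intros r Hr Hre.
    assert (Hex : exists psi, is_dual psi /\ Rbar_lt (dnorm (dsub psi xst)) (Finite r) /\ ~ subdiff f x psi).
    { apply NNPP. intro H. apply Hnint. split; auto. exists r. split; auto. intros psi Hpsi Hl.
      apply NNPP. intro H2. apply H. exists psi; auto. }
    destruct Hex as [psi [Hpd [Hpl Hpn]]].
    assert (Hz : exists z a, f z = Finite a /\ a < psi (vsub z x)).
    { apply NNPP. intro H. apply Hpn. apply (subdiff_intro f x psi 0); auto.
      intros u be Hu. apply Rnot_lt_le. intro H2. apply H. exists u, be. split; auto. lra. }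
    destruct Hz as [z [a [Hza Ha]]].
    set (w := dsub psi xst).
    assert (Hwd : is_dual w) by (apply is_dual_dsub; auto).
    assert (Hwb : forall h, Rabs (w h) <= r * vnorm h) by (exact (dnorm_lt_bound w r Hwd Hpl)).
    set (xs := fun h => 1 * psi h + (-2) * xst h).
    assert (Hxsd : is_dual xs) by (apply is_dual_comb; auto).
    set (g := fun u => Rbar_addr (xs (vsub u x)) (f u)).
    assert (Hg : Ptb_wl f eps g).
    { exists x, xs. split; auto. split; auto. split; auto.
      apply dnorm_le_of_bound; auto. intros h. unfold xs.
      pose proof (Hwb h) as E1. unfold w, dsub in E1. pose proof (Hn3 h).
      replace (1 * psi h + -2 * xst h) with ((psi h - xst h) + - xst h) by ring.
      eapply Rle_trans. apply Rabs_triang. rewrite Rabs_Ropp.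
      pose proof (vnorm_nonneg h). nra. }
    apply (Rbar_le_trans _ (Er g)). { apply inf_lower. exists g; auto. }
    set (A := xst (vsub z x)). set (B := psi (vsub z x)).
    assert (HA : A <= a) by (pose proof (Hxs2 z a Hza); unfold A; lra).
    set (G := xs (vsub z x) + a).
    assert (HG : g z = Finite G) by (unfold g; rewrite Hza; reflexivity).
    assert (HG1 : 0 < G) by (unfold G, xs; unfold A, B in *; lra).
    assert (HG2 : G < 2 * (B - A)) by (unfold G, xs; unfold A, B in *; lra).
    assert (Hdlow : Rbar_le (Finite ((B - A) / r)) (Defs.dist z (Sf g))).
    { unfold Defs.dist. apply inf_greatest. intros y [s [Hs ->]]. simpl.
      unfold Sf, g in Hs. destruct (f s) as [b| |] eqn:Es; simpl in Hs; try contradiction.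
      2:{ exfalso; apply (Hm s); auto. }
      pose proof (Hxs2 s b Es).
      assert (Hws : w (vsub s x) <= 0).
      { unfold w, dsub. unfold xs in Hs. lra. }
      assert (Hwz : w (vsub z x) = B - A) by (unfold w, dsub; fold A B; ring).
      assert (Hwzs : w (vsub z s) = w (vsub z x) - w (vsub s x)).
      { rewrite !(dual_sub _ Hwd). ring. }
      pose proof (Hwb (vsub z s)) as E. apply abs_le_split in E.
      rewrite (vnorm_sub_sym z s) in E.
      apply (Rmult_le_reg_r r); auto. replace ((B - A) / r * r) with (B - A) by (field; lra). nra. }
    assert (Hdup : Rbar_le (Defs.dist z (Sf g)) (Finite (vnorm (vsub x z)))).
    { unfold Defs.dist. apply inf_lower. exists x. split; auto.
      unfold Sf, g. rewrite Hx, vsub_self, (dual_zero _ Hxsd). simpl; lra. }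
    destruct (Rbar_between _ _ _ Hdlow Hdup) as [D [HD1 [HD2 _]]].
    assert (HBA : 0 < B - A) by lra.
    assert (HDpos : 0 < D). { assert (0 < (B - A) / r) by (apply Rdiv_lt_0_compat; lra). lra. }
    unfold Er. apply (Rbar_le_trans _ (Rbar_ratio (g z) (Defs.dist z (Sf g)))).
    { apply inf_lower. exists z. split; auto. rewrite HG. apply Rbar_lt_fin; auto. }
    rewrite HG, HD1. simpl. destruct (Rlt_dec 0 D) as [_|C]; [|lra]. simpl.
    apply (Rmult_le_reg_r D); auto. replace (G / D * D) with G by (field; lra).
    assert ((B - A) <= r * D).
    { apply (Rmult_le_compat_r r) in HD2; [|lra]. replace ((B - A) / r * r) with (B - A) in HD2 by (field; lra). lra. }
    nra. }
  destruct (Er_fam (Ptb_wl f eps)) as [E| |] eqn:EE.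
  - apply Rbar_lt_fin in Hpos. set (r := Rmin (eps - n) (E / 4)).
    assert (0 < r) by (apply Rmin_pos; lra).
    pose proof (Key r H (Rmin_l _ _)). simpl in H0. pose proof (Rmin_r (eps - n) (E / 4)). fold r in H1. lra.
  - pose proof (Key ((eps - n)/2) ltac:(lra) ltac:(lra)). simpl in H. exact H.
  - destruct Hpos as [Hp _]. simpl in Hp. exact Hp.
Qed.

End Parts.


Section Part3.
Context {X : Banach}.
Local Notation vadd := (vadd X).
Local Notation vscal := (vscal X).
Local Notation vopp := (vopp X).
Local Notation vzero := (vzero X).
Local Notation vnorm := (vnorm X).

Lemma part3_key (f : X -> Rbar) eps m : Gamma0 f -> 0 <= eps -> 0 < m ->
  (forall xi c tau0, 0 <= xi -> c < m -> Rbar_le tau0 (Finite (xi + c)) ->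
     ~ Rbar_le (Rbar_addr xi (subdiff_bd f)) (Rbar_addr eps tau0)) ->
  forall g, Ptb f eps g -> Rbar_le (Finite m) (Er g).
Proof.
  intros [[_ Hm] [Hcv Hlsc]] Heps Hmpos Hmk g [[y0 Hy0] [p [Hp [Hg [x [xi [Hx [Hxi [Hcond Hlipx]]]]]]]]].
  assert (Eg : g = fun u => Rbar_addr (p u) (f u)) by (apply functional_extensionality; auto).
  subst g. clear Hg.
  pose proof (convex_lip p x xi Hxi Hp Hlipx) as Hlip.
  assert (Hlip' : forall a b, Rabs (p a - p b) <= xi * vnorm (vsub a b)) by (intros a b; apply Hlip).
  pose proof (lsc_sum f p xi Hlsc Hm Hxi Hlip') as Hglsc.
  unfold Sf_eq in Hx.
  unfold Er. apply inf_greatest. intros r [u [Hu ->]]. apply NNPP; intro Hnot.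
  destruct (f u) as [fu| |] eqn:Efu; simpl in Hu.
  2:{ apply Hnot. simpl. exact I. }
  2:{ destruct Hu as [Hu _]; simpl in Hu; contradiction. }
  apply Rbar_lt_fin in Hu. set (a0 := p u + fu).
  set (Sg := Sf (fun u => Rbar_addr (p u) (f u))).
  assert (Dup : Rbar_le (Defs.dist u Sg) (Finite (vnorm (vsub y0 u)))).
  { unfold Defs.dist. apply inf_lower. exists y0; split; auto. }
  assert (Dlow : Rbar_le (Finite 0) (Defs.dist u Sg)).
  { unfold Defs.dist. apply inf_greatest. intros y [s [_ ->]]. simpl. apply vnorm_nonneg. }
  destruct (Rbar_between _ _ _ Dlow Dup) as [D [HD [HD0 _]]].
  fold Sg in Hnot. rewrite HD in Hnot. simpl in Hnot.
  destruct (Rlt_dec 0 D) as [HDp|HDp]; [|apply Hnot; exact I].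
  simpl in Hnot. fold a0 in Hnot.
  assert (Ha0 : a0 < m * D).
  { apply Rnot_le_lt in Hnot. apply (Rmult_lt_compat_r D) in Hnot; auto.
    replace (a0 / D * D) with a0 in Hnot by (field; lra). lra. }
  set (lam := (a0 / m + D) / 2).
  assert (Hlam1 : a0 / m < lam).
  { assert (a0 / m < D). { apply (Rmult_lt_reg_r m); auto. replace (a0 / m * m) with a0 by (field; lra). lra. }
    unfold lam; lra. }
  assert (Hlam2 : lam < D).
  { assert (a0 / m < D). { apply (Rmult_lt_reg_r m); auto. replace (a0 / m * m) with a0 by (field; lra). lra. }
    unfold lam; lra. }
  assert (Hlam0 : 0 < lam). { assert (0 < a0 / m) by (apply Rdiv_lt_0_compat; auto). lra. }
  set (phi := fun w => match f w with Finite r => Finite (Rmax (p w + r) 0) | p_infty => p_infty | m_infty => Finite 0 end).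
  assert (Hphi0 : forall w, Rbar_le (Finite 0) (phi w)).
  { intros w. unfold phi. destruct (f w); simpl; auto; try lra. apply Rmax_r. }
  assert (Hphilsc : lsc phi).
  { intros w a Ha. destruct (Rlt_dec a 0) as [Haneg|Hapos].
    - exists 1. split; [lra|]. intros y _. pose proof (Hphi0 y). eapply Rbar_lt_le_trans; [|exact H].
      apply Rbar_lt_fin; auto.
    - assert (Hg : Rbar_lt (Finite a) (Rbar_addr (p w) (f w))).
      { unfold phi in Ha. destruct (f w) as [r| |]; simpl in *.
        + apply Rbar_lt_fin in Ha. apply Rbar_lt_fin. unfold Rmax in Ha. destruct (Rle_dec (p w + r) 0); lra.
        + exact Ha.
        + apply Rbar_lt_fin in Ha. lra. }
      destruct (Hglsc w a Hg) as [d [Hd Hnb]]. exists d. split; auto.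
      intros y Hy. specialize (Hnb y Hy). unfold phi. destruct (f y) as [r| |]; simpl in *.
      + apply Rbar_lt_fin in Hnb. apply Rbar_lt_fin. pose proof (Rmax_l (p y + r) 0). lra.
      + exact Hnb.
      + destruct Hnb as [Hnb _]; simpl in Hnb; contradiction. }
  assert (Hphiu : phi u = Finite a0).
  { unfold phi. rewrite Efu. f_equal. apply Rmax_left. unfold a0; lra. }
  destruct (ekeland phi u a0 lam Hphilsc Hphi0 Hphiu Hlam0 Hu) as [v [b [Hphiv [Hvu [Hba0 Hek]]]]].
  destruct (f v) as [fv| |] eqn:Efv.
  2:{ unfold phi in Hphiv. rewrite Efv in Hphiv. discriminate. }
  2:{ exfalso; apply (Hm v); auto. }
  set (gv := p v + fv).
  assert (Hgv : 0 < gv).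
  { apply Rnot_le_lt. intro Hle.
    assert (Sg v) by (unfold Sg, Sf; rewrite Efv; simpl; unfold gv in Hle; lra).
    assert (Rbar_le (Defs.dist u Sg) (Finite (vnorm (vsub v u)))) by (unfold Defs.dist; apply inf_lower; exists v; auto).
    rewrite HD in H0. simpl in H0. lra. }
  assert (Hb : b = gv).
  { unfold phi in Hphiv. rewrite Efv in Hphiv. inversion Hphiv as [Hb']. unfold gv in *.
    unfold Rmax; destruct (Rle_dec (p v + fv) 0); lra. }
  set (c := a0 / lam).
  assert (Hc0 : 0 <= c) by (unfold c; left; apply Rdiv_lt_0_compat; auto).
  assert (Hcm : c < m).
  { unfold c. apply (Rmult_lt_reg_r lam); auto. replace (a0 / lam * lam) with a0 by (field; lra).
    apply (Rmult_lt_compat_r m) in Hlam1; auto. replace (a0 / m * m) with a0 in Hlam1 by (field; lra). lra. }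
  destruct (Hglsc v 0) as [del [Hdel Hnb]].
  { rewrite Efv. simpl. apply Rbar_lt_fin. exact Hgv. }
  assert (Hmin : forall w be, f w = Finite be -> fv + p v <= be + p w + c * vnorm (vsub w v)).
  { intros w be Hw. set (nw := vnorm (vsub w v)).
    assert (Hnw : 0 <= nw) by apply vnorm_nonneg.
    set (t := Rmin 1 (del / (2 * (nw + 1)))).
    assert (Ht0 : 0 < t) by (apply Rmin_pos; [lra| apply Rdiv_lt_0_compat; lra]).
    assert (Ht1 : t <= 1) by apply Rmin_l.
    set (y := vadd (vscal t w) (vscal (1 - t) v)).
    assert (Hyv : vnorm (vsub y v) = t * nw).
    { unfold y. rewrite vsub_comb_l, vnorm_scal, Rabs_right; [reflexivity|lra]. }
    assert (Hyd : vnorm (vsub y v) < del).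
    { rewrite Hyv. pose proof (Rmin_r 1 (del / (2 * (nw + 1)))). fold t in H.
      apply (Rle_lt_trans _ (del / (2 * (nw + 1)) * nw)). nra.
      apply (Rmult_lt_reg_r (2 * (nw + 1))). lra.
      replace (del / (2 * (nw + 1)) * nw * (2 * (nw + 1))) with (del * nw) by (field; lra). nra. }
    pose proof (Hcv w v be fv t (conj (Rlt_le _ _ Ht0) Ht1)) as Hconv.
    rewrite Hw, Efv in Hconv. specialize (Hconv (Rle_refl _) (Rle_refl _)). fold y in Hconv.
    pose proof (Hp w v t (conj (Rlt_le _ _ Ht0) Ht1)) as Hpc. fold y in Hpc.
    specialize (Hnb y Hyd).
    destruct (f y) as [fy| |] eqn:Efy; simpl in Hconv; try contradiction.
    2:{ exfalso; apply (Hm y); auto. }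
    simpl in Hnb. apply Rbar_lt_fin in Hnb.
    assert (Hphiy : phi y = Finite (p y + fy)).
    { unfold phi. rewrite Efy. f_equal. apply Rmax_left. lra. }
    pose proof (Hek y (p y + fy) Hphiy) as Hk. rewrite Hb, Hyv in Hk. fold c in Hk.
    assert (t * gv <= t * (be + p w + c * nw)).
    { unfold gv in *. nra. }
    apply Rmult_le_reg_l in H; auto. unfold gv in H. lra. }
  destruct (subgrad_exists f p v fv c xi Hm Hcv Hp Efv Hc0 Hxi Hlip' Hmin) as [us [Hus Husn]].
  destruct (subdiff_val f v us fv Efv Hus) as [Husd Hus2].
  assert (Htau : Rbar_le (tau f x xi (Rabs (p x))) (Finite (xi + c))).
  { unfold tau. destruct (excluded_middle_informative (dinterior (subdiff f x) dzero)) as [Hint|Hnint].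
    - apply NNPP; intro H. apply Rbar_not_le_lt in H.
      assert (Hrho : exists rho, xi + c < rho /\ Rbar_lt (Finite rho) (ddist0 (dboundary (subdiff f x)))).
      { destruct (ddist0 (dboundary (subdiff f x))) as [T| |].
        - apply Rbar_lt_fin in H. exists ((xi + c + T) / 2). split. lra. apply Rbar_lt_fin. lra.
        - exists (xi + c + 1). split. lra. split; simpl; auto. discriminate.
        - destruct H as [H _]; simpl in H; contradiction. }
      destruct Hrho as [rho [Hrho1 Hrho2]].
      assert (Hball : forall w be, f w = Finite be -> rho * vnorm (vsub w x) <= be).
      { intros w be Hw. destruct (norming (vsub w x)) as [l [Hld [Hln [Hlw Hlb]]]].
        set (ys := fun h => rho * l h + 0 * l h).
        assert (Hysd : is_dual ys) by (apply is_dual_comb; auto).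
        assert (Hys : subdiff f x ys).
        { apply ball_in; auto. eapply Rbar_le_lt_trans; [|exact Hrho2].
          apply dnorm_le_of_bound; [lra|]. intros h. unfold ys. rewrite Rmult_0_l, Rplus_0_r, Rabs_mult, Rabs_right by lra.
          pose proof (Hlb h). nra. }
        destruct (subdiff_val f x ys 0 Hx Hys) as [_ Hys2].
        pose proof (Hys2 w be Hw). unfold ys in H0. rewrite Hlw in H0. lra. }
      unfold Sf in Hy0. destruct (f y0) as [be0| |] eqn:Ey0; simpl in Hy0; try contradiction.
      2:{ exfalso; apply (Hm y0); auto. }
      pose proof (Hball y0 be0 Ey0) as B0. pose proof (Hlip x y0) as L0. apply abs_le_split in L0.
      assert (Hpx : p x <= 0). { pose proof (vnorm_nonneg (vsub y0 x)). nra. }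
      pose proof (Hball v fv Efv) as Bv.
      pose proof (Hus2 x 0 Hx) as Ux. rewrite (dual_sub _ Husd) in Ux.
      pose proof (dnorm_bound us (xi + c) Husd Husn (vsub v x)) as Ub. apply abs_le_split in Ub.
      rewrite (dual_sub _ Husd) in Ub.
      destruct (vnorm_nonneg (vsub v x)) as [Hpos|Hz].
      + nra.
      + symmetry in Hz. apply vnorm_eq0_sub in Hz. subst v. rewrite Hx in Efv. inversion Efv. subst fv.
        unfold gv in Hgv. lra.
    - apply (Rbar_le_trans _ (ddist0 (subdiff f v))).
      + apply inf_lower. exists v. split; auto. rewrite Efv. simpl.
        pose proof (Hlip x v) as L0. apply abs_le_split in L0. pose proof (Rle_abs (p x)). unfold gv in Hgv. lra.
      + apply (Rbar_le_trans _ (dnorm us)); auto. apply inf_lower. exists us; auto. }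
  exact (Hmk xi c _ Hxi Hcm Htau Hcond).
Qed.

Lemma part3 (f : X -> Rbar) eps : Gamma0 f -> 0 <= eps ->
  Rbar_lt (Finite eps) (subdiff_bd f) -> Rbar_lt (Finite 0) (Er_fam (Ptb f eps)).
Proof.
  intros Hf Heps Hlt.
  assert (Hex : exists m, 0 < m /\ (forall xi c tau0, 0 <= xi -> c < m -> Rbar_le tau0 (Finite (xi + c)) ->
     ~ Rbar_le (Rbar_addr xi (subdiff_bd f)) (Rbar_addr eps tau0))).
  { destruct (subdiff_bd f) as [B| |].
    - apply Rbar_lt_fin in Hlt. exists (B - eps). split. lra.
      intros xi c tau0 Hxi Hc Htau Hle. destruct tau0 as [T| |]; simpl in *; auto; lra.
    - exists 1. split. lra. intros xi c tau0 Hxi Hc Htau Hle. destruct tau0; simpl in *; auto.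
    - destruct Hlt as [H _]; simpl in H; contradiction. }
  destruct Hex as [m [Hm Hmk]].
  apply (Rbar_lt_le_trans _ (Finite m)). apply Rbar_lt_fin; auto.
  unfold Er_fam. apply inf_greatest. intros y [g [Hg ->]]. apply (part3_key f eps m); auto.
Qed.

End Part3.

Theorem mainTheorem10 (X : Banach) (f : X -> Rbar) (eps : R)
  (hf : Gamma0 f) (hS : exists x, Sf f x) (heps : 0 <= eps) :
  (Rbar_lt (Finite 0) (Er_fam (Ptb_w f eps)) -> Rbar_lt (Finite 0) (Er_fam (Ptb_wl f eps))) /\
  (Rbar_lt (Finite 0) (Er_fam (Ptb_wl f eps)) -> Rbar_le (Finite eps) (subdiff_bd f)) /\
  (Rbar_lt (Finite eps) (subdiff_bd f) -> Rbar_lt (Finite 0) (Er_fam (Ptb f eps))) /\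
  (Rbar_lt (Finite 0) (Er_fam (Ptb f eps)) -> Rbar_lt (Finite 0) (Er_fam (Ptb_l f eps))).
Proof.
  split; [|split; [|split]].
  - intros H. eapply Rbar_lt_le_trans; [exact H|]. apply Er_fam_mono. apply wl_sub_w.
  - apply part2; auto.
  - apply part3; auto.
  - intros H. eapply Rbar_lt_le_trans; [exact H|]. apply Er_fam_mono. apply l_sub.
Qed.
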